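(* Let $(\omega,c)\in\mathbb{R}^2$ satisfy: $\omega>c^2/4$, or $\omega=c^2/4$ and $c>0$. Let $$\alpha_0=\tfrac13\bigl(4c+\sqrt{48\omega+4c^2}\bigr),\qquad A(x)=-3x^2+8cx+64\omega,\qquad L_0=L_0(\omega,c)=\frac{2\pi}{\sqrt{\alpha_0\sqrt{A(\alpha_0)}}}.$$ Assume $L_0<L<\infty$. Then there exists a positive single-bump solution $\Phi^L_{\omega,c}$ of $$-\Phi''+\Bigl(\omega-\frac{c^2}{4}\Bigr)\Phi+\frac c2|\Phi|^2\Phi-\frac3{16}|\Phi|^4\Phi=0,\qquad x\in\mathbb{T}_{2L},$$ such that $\Phi^L_{\omega,c}(x)\to\Phi_{\omega,c}(x)$ for every $x\in\mathbb{R}$ as $L\to\infty$. Moreover $\Phi^L_{\omega,c}$ is explicitly given by $$\bigl(\Phi^L_{\omega,c}(x)\bigr)^2=\eta_3\,\frac{\mathrm{dn}^2\!\left(\frac{x}{2g};k\right)}{1+\beta^2\,\mathrm{sn}^2\!\left(\frac{x}{2g};k\right)},\qquad x\in[-L,L],$$ for some parameters $\eta_3>0$, $g>0$, $k\in(0,1)$, $\beta\in\mathbb{R}$ depending on $(L,\omega,c)$.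
   Context: $\mathbb{T}_{2L}=\mathbb{R}/2L\mathbb{Z}\simeq[-L,L]$ is the torus of length $2L$. $\Phi_{\omega,c}$ is the positive even function on $\mathbb{R}$ given by $\Phi_{\omega,c}^2(x)=\dfrac{4\omega-c^2}{\sqrt{\omega}\bigl(\cosh(\sqrt{4\omega-c^2}\,x)-\frac{c}{2\sqrt\omega}\bigr)}$ if $\omega>c^2/4$, and $\Phi_{\omega,c}^2(x)=\dfrac{4c}{(cx)^2+1}$ if $\omega=c^2/4$, $c>0$ (the soliton profile on the whole line). A positive single-bump solution on $\mathbb{T}_{2L}$ means a positive $2L$-periodic solution which (up to translation) attains its maximum at $x=0$, is even, and is strictly decreasing on $(0,L)$, attaining its minimum at $x=L$ (one bump per period). $\mathrm{sn}(\cdot;k)$, $\mathrm{dn}(\cdot;k)$ are the Jacobi elliptic functions with modulus $k$: if $u=\int_0^\varphi(1-k^2\sin^2\theta)^{-1/2}d\theta$ then $\mathrm{sn}(u;k)=\sin\varphi$, $\mathrm{dn}(u;k)=\sqrt{1-k^2\mathrm{sn}^2(u;k)}$. The quantity $A(\alpha_0)$ is positive under the hypothesis on $(\omega,c)$. *)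

(* Defs.v *)
From Stdlib Require Import Reals Lra ClassicalEpsilon.
From Coquelicot Require Import Coquelicot.
Open Scope R_scope.

Definition ellF (k phi : R) : R :=
  RInt (fun th => / sqrt (1 - k ^ 2 * (sin th) ^ 2)) 0 phi.

(* Jacobi amplitude: am(u;k) is the phi with F(phi;k) = u
   (unique for 0 <= k < 1, since F(.;k) is an increasing bijection of R). *)
Definition jam (u k : R) : R :=
  epsilon (inhabits 0) (fun phi => ellF k phi = u).

Definition jsn (u k : R) : R := sin (jam u k).
Definition jdn (u k : R) : R := sqrt (1 - k ^ 2 * (jsn u k) ^ 2).

Definition soliton (om c x : R) : R :=
  if Rlt_dec (c ^ 2 / 4) om then
    sqrt ((4 * om - c ^ 2) /
          (sqrt om * (cosh (sqrt (4 * om - c ^ 2) * x) - c / (2 * sqrt om))))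
  else sqrt (4 * c / ((c * x) ^ 2 + 1)).

Definition alpha0 (om c : R) : R := / 3 * (4 * c + sqrt (48 * om + 4 * c ^ 2)).
Definition Afun (om c x : R) : R := - 3 * x ^ 2 + 8 * c * x + 64 * om.
Definition L0 (om c : R) : R :=
  2 * PI / sqrt (alpha0 om c * sqrt (Afun om c (alpha0 om c))).

Definition solves_ode (om c : R) (Phi : R -> R) : Prop :=
  exists Phi1 Phi2 : R -> R,
    forall x, is_derive Phi x (Phi1 x) /\ is_derive Phi1 x (Phi2 x) /\
      - Phi2 x + (om - c ^ 2 / 4) * Phi x + c / 2 * (Rabs (Phi x)) ^ 2 * Phi x
        - 3 / 16 * (Rabs (Phi x)) ^ 4 * Phi x = 0.

Definition pos_single_bump_solution (om c L : R) (Phi : R -> R) : Prop :=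
  solves_ode om c Phi /\
  (forall x, Phi (x + 2 * L) = Phi x) /\
  (forall x, 0 < Phi x) /\
  (forall x, Phi (- x) = Phi x) /\
  (forall x, Phi x <= Phi 0) /\
  (forall x, Phi L <= Phi x) /\
  (forall x y, 0 < x -> x < y -> y < L -> Phi y < Phi x).

(* Main.v *)
Require Import Defs.
From Stdlib Require Import Reals Lra Lia ClassicalEpsilon Ranalysis5.
From Coquelicot Require Import Coquelicot.
Open Scope R_scope.

Definition hk (k t : R) : R := / sqrt (1 - k ^ 2 * (sin t) ^ 2).

Lemma sin2_le1 t : (sin t)^2 <= 1.
Proof. pose proof (SIN_bound t). nra. Qed.

Lemma hk_arg_pos k t : k^2 < 1 -> 0 < 1 - k^2 * (sin t)^2.
Proof. intros. pose proof (sin2_le1 t). assert (0 <= (sin t)^2) by apply pow2_ge_0.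
 assert (0<=k^2) by apply pow2_ge_0. nra. Qed.

Lemma hk_cont k t : 0 < 1 - k^2 * (sin t)^2 -> continuous (hk k) t.
Proof. intros H. apply (ex_derive_continuous (K:=R_AbsRing) (V:=R_NormedModule)). unfold hk. auto_derive.
 split; [lra|]. split; [|exact I]. apply Rgt_not_eq, sqrt_lt_R0; lra. Qed.

Lemma exR k a b : k^2 < 1 -> ex_RInt (hk k) a b.
Proof. intros. apply (ex_RInt_continuous (V:=R_CompleteNormedModule)). intros. apply hk_cont, hk_arg_pos; auto. Qed.

Lemma ellF_eq k phi : ellF k phi = RInt (hk k) 0 phi.
Proof. reflexivity. Qed.

Lemma ellF_deriv k x : k^2 < 1 -> is_derive (ellF k) x (hk k x).
Proof. intros. apply (is_derive_RInt (hk k) (ellF k) 0 x).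
 - apply filter_forall; intros; apply (RInt_correct (V:=R_CompleteNormedModule)); apply exR; auto.
 - apply hk_cont, hk_arg_pos; auto. Qed.

Lemma ellF_cont k x : k^2 < 1 -> continuous (ellF k) x.
Proof. intros. apply (ex_derive_continuous (K:=R_AbsRing) (V:=R_NormedModule)). eexists. apply ellF_deriv; auto. Qed.

Lemma ellF_diff k a b : k^2 < 1 -> ellF k b - ellF k a = RInt (hk k) a b.
Proof. intros. rewrite !ellF_eq. rewrite <- (RInt_Chasles (hk k) 0 a b); try apply exR; auto.
 change plus with Rplus. simpl. ring. Qed.

Lemma hk_ge1 k t : k^2 < 1 -> 1 <= hk k t.
Proof. intros. unfold hk. pose proof (hk_arg_pos k t H).
 assert (0 <= k^2 * (sin t)^2) by (apply Rmult_le_pos; apply pow2_ge_0).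
 assert (sqrt (1 - k ^ 2 * sin t ^ 2) <= 1).
 { apply Rle_trans with (sqrt 1); [apply sqrt_le_1_alt; lra | rewrite sqrt_1; lra]. }
 assert (0 < sqrt (1 - k ^ 2 * sin t ^ 2)) by (apply sqrt_lt_R0; lra).
 replace 1 with (/ 1) at 1 by apply Rinv_1. apply Rinv_le_contravar; lra. Qed.

Lemma hk_le k t : k^2 < 1 -> hk k t <= / sqrt (1 - k^2).
Proof. intros. unfold hk. pose proof (hk_arg_pos k t H).
 pose proof (sin2_le1 t). assert (0<=k^2) by apply pow2_ge_0.
 apply Rinv_le_contravar. apply sqrt_lt_R0; lra. apply sqrt_le_1_alt. nra. Qed.

Lemma RInt_cst a b (m : R) : @eq R (RInt (fun _ => m) a b) ((b - a) * m).
Proof. rewrite RInt_const. reflexivity. Qed.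

Lemma ellF_lb k a b : k^2 < 1 -> a <= b -> b - a <= ellF k b - ellF k a.
Proof. intros. rewrite ellF_diff; auto.
 assert (E: @eq R (RInt (fun _ => 1) a b) (b - a)) by (rewrite RInt_cst; ring). rewrite <- E.
 apply RInt_le; auto. apply ex_RInt_const. apply exR; auto.
 intros; apply hk_ge1; auto. Qed.

Lemma ellF_ub k a b : k^2 < 1 -> a <= b -> ellF k b - ellF k a <= (b - a) * / sqrt (1 - k^2).
Proof. intros. rewrite ellF_diff; auto. rewrite <- RInt_cst.
 apply RInt_le; auto. apply exR; auto. apply ex_RInt_const.
 intros; apply hk_le; auto. Qed.

Lemma ellF_0 k : ellF k 0 = 0.
Proof. rewrite ellF_eq. rewrite RInt_point. reflexivity. Qed.

Lemma hk_even k t : hk k (- t) = hk k t.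
Proof. unfold hk. rewrite sin_neg. f_equal. f_equal. ring. Qed.

Lemma hk_shift k t : hk k (t + PI) = hk k t.
Proof. unfold hk. rewrite neg_sin. f_equal. f_equal. ring. Qed.

Lemma ellF_odd k phi : k^2 < 1 -> ellF k (- phi) = - ellF k phi.
Proof. intros. rewrite !ellF_eq.
 assert (E := RInt_comp_lin (hk k) (-1) 0 0 phi).
 replace (-1 * 0 + 0) with 0 in E by ring. replace (-1 * phi + 0) with (- phi) in E by ring.
 rewrite <- E by (apply exR; auto).
 assert (E2 := RInt_opp (hk k) 0 phi (exR k 0 phi H)).
 change opp with Ropp in E2. simpl in E2. rewrite <- E2.
 apply RInt_ext. intros. change scal with Rmult; simpl.
 replace (-1 * x + 0) with (- x) by ring. rewrite hk_even. change mult with Rmult. simpl. ring. Qed.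

Lemma ellF_shift k phi : k^2 < 1 -> ellF k (phi + PI) = ellF k phi + ellF k PI.
Proof. intros.
 assert (E := ellF_diff k PI (phi + PI) H).
 assert (E2 := RInt_comp_lin (hk k) 1 PI 0 phi).
 replace (1 * 0 + PI) with PI in E2 by ring. replace (1 * phi + PI) with (phi + PI) in E2 by ring.
 rewrite <- E2 in E by (apply exR; auto).
 erewrite RInt_ext in E.
 2:{ intros. change scal with Rmult; simpl. change mult with Rmult; simpl.
   replace (1 * x + PI) with (x + PI) by ring. rewrite hk_shift. rewrite Rmult_1_l. reflexivity. }
 rewrite <- ellF_eq in E. lra. Qed.

Definition Pk k := ellF k PI.

Lemma ellF_half k : k^2 < 1 -> ellF k (PI/2) = Pk k / 2.
Proof. intros. unfold Pk. assert (E := ellF_shift k (- (PI/2)) H).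
 rewrite ellF_odd in E by auto. replace (- (PI / 2) + PI) with (PI/2) in E by field. lra. Qed.

Lemma ellF_strict k a b : k^2 < 1 -> a < b -> ellF k a < ellF k b.
Proof. intros. pose proof (ellF_lb k a b H ltac:(lra)). lra. Qed.

Lemma ellF_mono k a b : k^2 < 1 -> a <= b -> ellF k a <= ellF k b.
Proof. intros. pose proof (ellF_lb k a b H ltac:(lra)). lra. Qed.

Lemma ellF_contpt k : k^2 < 1 -> continuity (ellF k).
Proof. intros H x. apply continuity_pt_filterlim. apply ellF_cont; auto. Qed.

Lemma ellF_surj k u : k^2 < 1 -> exists phi, ellF k phi = u.
Proof. intros H.
 assert (H1 := ellF_lb k 0 (Rabs u) H (Rabs_pos u)). rewrite ellF_0 in H1.
 assert (H2 := ellF_odd k (Rabs u) H).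
 destruct (IVT_gen (ellF k) (- Rabs u) (Rabs u) u (ellF_contpt k H)) as [phi [_ Hp]].
 - rewrite H2. unfold Rmin, Rmax. destruct (Rle_dec _ _); split; unfold Rabs in *; destruct (Rcase_abs u); lra.
 - exists phi; auto. Qed.

Lemma jam_spec k u : k^2 < 1 -> ellF k (jam u k) = u.
Proof. intros H. unfold jam. apply epsilon_spec. apply ellF_surj; auto. Qed.

Lemma jam_unique k u phi : k^2 < 1 -> ellF k phi = u -> jam u k = phi.
Proof. intros H E. pose proof (jam_spec k u H).
 destruct (Rtotal_order (jam u k) phi) as [h|[h|h]]; auto.
 - apply (ellF_strict k) in h; auto. lra.
 - apply (ellF_strict k) in h; auto. lra. Qed.

Lemma jam_lip k u v : k^2 < 1 -> u <= v -> 0 <= jam v k - jam u k <= v - u.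
Proof. intros H h. pose proof (jam_spec k u H). pose proof (jam_spec k v H).
 destruct (Rle_lt_dec (jam u k) (jam v k)).
 - pose proof (ellF_lb k _ _ H r). lra.
 - pose proof (ellF_strict k _ _ H r). lra. Qed.

Lemma jam_strict k u v : k^2 < 1 -> u < v -> jam u k < jam v k.
Proof. intros H h. pose proof (jam_spec k u H). pose proof (jam_spec k v H).
 destruct (Rlt_le_dec (jam u k) (jam v k)); auto.
 pose proof (ellF_mono k _ _ H r). lra. Qed.

Lemma jam_mono k u v : k^2 < 1 -> u <= v -> jam u k <= jam v k.
Proof. intros H h. pose proof (jam_lip k u v H h). lra. Qed.

Lemma jam_0 k : k^2 < 1 -> jam 0 k = 0.
Proof. intros. apply jam_unique; auto. apply ellF_0. Qed.

Lemma jam_odd k u : k^2 < 1 -> jam (- u) k = - jam u k.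
Proof. intros. apply jam_unique; auto. rewrite ellF_odd, jam_spec; auto. Qed.

Lemma jam_shift k u : k^2 < 1 -> jam (u + Pk k) k = jam u k + PI.
Proof. intros. apply jam_unique; auto. rewrite ellF_shift, jam_spec; auto. Qed.

Lemma jam_half k : k^2 < 1 -> jam (Pk k / 2) k = PI / 2.
Proof. intros. apply jam_unique; auto. apply ellF_half; auto. Qed.

Lemma jam_nonneg k u : k^2 < 1 -> 0 <= u -> 0 <= jam u k.
Proof. intros. rewrite <- (jam_0 k H). apply jam_mono; auto. Qed.

Lemma jam_le k u : k^2 < 1 -> 0 <= u -> jam u k <= u.
Proof. intros. pose proof (jam_lip k 0 u H H0). rewrite jam_0 in H1; auto. lra. Qed.

Lemma jam_contpt k u : k^2 < 1 -> continuity_pt (fun v => jam v k) u.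
Proof. intros H. unfold continuity_pt, continue_in, limit1_in, limit_in. intros eps Heps.
 exists eps. split; auto. intros x [_ Hx]. simpl in *. unfold R_dist in *.
 destruct (Rle_dec u x).
 - pose proof (jam_lip k u x H r). rewrite Rabs_right in Hx by lra. rewrite Rabs_right; lra.
 - pose proof (jam_lip k x u H ltac:(lra)). rewrite Rabs_left in Hx by lra.
   rewrite Rabs_left1; lra. Qed.

Lemma hk_pos k t : k^2 < 1 -> 0 < hk k t.
Proof. intros. pose proof (hk_ge1 k t H). lra. Qed.

Lemma jam_deriv k u : k^2 < 1 ->
  is_derive (fun v => jam v k) u (sqrt (1 - k^2 * (sin (jam u k))^2)).
Proof. intros H.
 pose (Prf := fun a (_ : jam (u-1) k <= a <= jam (u+1) k) =>
   exist (fun l => derivable_pt_abs (ellF k) a l) (hk k a)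
     (proj1 (is_derive_Reals _ _ _) (ellF_deriv k a H))).
 assert (Hi : jam (u-1) k <= jam u k <= jam (u+1) k).
 { split; apply jam_mono; auto; lra. }
 assert (D := Ranalysis5.derivable_pt_lim_recip_interv (ellF k) (fun v => jam v k) (u-1) (u+1) u Prf
   (jam_contpt k u H) ltac:(lra) ltac:(lra) Hi).
 apply is_derive_Reals.
 replace (sqrt (1 - k ^ 2 * sin (jam u k) ^ 2)) with (1 / derive_pt (ellF k) (jam u k) (Prf (jam u k) Hi)).
 - apply D. intros. unfold comp, id. apply jam_spec; auto.
   simpl. pose proof (hk_pos k (jam u k) H). lra.
 - simpl. unfold hk. pose proof (hk_arg_pos k (jam u k) H).
   assert (0 < sqrt (1 - k ^ 2 * sin (jam u k) ^ 2)) by (apply sqrt_lt_R0; lra).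
   replace (k * (k * 1) * (sin (jam u k) * (sin (jam u k) * 1))) with (k ^ 2 * sin (jam u k) ^ 2) by ring. field. lra. Qed.

Definition Psi e k b t := sqrt e * sqrt (1 - k^2 * (sin t)^2) / sqrt (1 + b^2 * (sin t)^2).

Lemma Psi_der e k b t : k^2 < 1 ->
  is_derive (Psi e k b) t
   (- sqrt e * (k^2 + b^2) * sin t * cos t /
      (sqrt (1 - k^2 * (sin t)^2) * (sqrt (1 + b^2 * (sin t)^2))^3)).
Proof. intros H. pose proof (hk_arg_pos k t H).
 assert (0 < 1 + b^2 * (sin t)^2) by (pose proof (pow2_ge_0 b); pose proof (pow2_ge_0 (sin t)); nra).
 unfold Psi. auto_derive.
 - repeat split; try lra; try exact I.
 - repeat split; try lra; try exact I. apply Rgt_not_eq, sqrt_lt_R0. lra.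
 - replace (1 + - (k * (k * 1) * (sin t * (sin t * 1)))) with (1 - k^2 * sin t^2) by ring.
   replace (1 + b * (b * 1) * (sin t * (sin t * 1))) with (1 + b^2 * sin t^2) by ring.
   assert (HD := sqrt_sqrt (1 - k^2 * sin t^2) ltac:(lra)).
   assert (HS := sqrt_sqrt (1 + b^2 * sin t^2) ltac:(lra)).
   assert (0 < sqrt (1 - k^2 * sin t^2)) by (apply sqrt_lt_R0; lra).
   assert (0 < sqrt (1 + b^2 * sin t^2)) by (apply sqrt_lt_R0; lra).
   set (D := sqrt (1 - k^2 * sin t^2)) in *. set (S := sqrt (1 + b^2 * sin t^2)) in *.
   field_simplify; try lra.
   assert (HD2: D^2 = 1 - k ^ 2 * sin t ^ 2) by (rewrite <- HD; ring).
   assert (HS2: S^2 = 1 + b ^ 2 * sin t ^ 2) by (rewrite <- HS; ring).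
   rewrite HD2, HS2. field. lra. Qed.

Definition Psi1 e k b g t := - sqrt e * (k^2 + b^2) / (2*g) * sin t * cos t / (sqrt (1 + b^2 * (sin t)^2))^3.
Definition dPsi1 e k b g t := - sqrt e * (k^2 + b^2) / (2*g) *
   ((1 - 2 * (sin t)^2) * (1 + b^2 * (sin t)^2) - 3 * b^2 * (sin t)^2 * (1 - (sin t)^2))
   / (sqrt (1 + b^2 * (sin t)^2))^5.

Lemma sin2cos2 t : (cos t)^2 = 1 - (sin t)^2.
Proof. pose proof (sin2_cos2 t). unfold Rsqr in H. nra. Qed.

Lemma Psi1_der e k b g t : g <> 0 -> is_derive (Psi1 e k b g) t (dPsi1 e k b g t).
Proof. intros Hg.
 assert (0 < 1 + b^2 * (sin t)^2) by (pose proof (pow2_ge_0 b); pose proof (pow2_ge_0 (sin t)); nra).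
 assert (0 < sqrt (1 + b * (b * 1) * (sin t * (sin t * 1)))) by (apply sqrt_lt_R0; nra).
 unfold Psi1, dPsi1. auto_derive.
 - repeat split; try lra; try exact I; try (apply Rgt_not_eq; repeat apply Rmult_lt_0_compat; lra).
 - replace (1 + b * (b * 1) * (sin t * (sin t * 1))) with (1 + b^2 * sin t^2) by ring.
   assert (HS := sqrt_sqrt (1 + b^2 * sin t^2) ltac:(lra)).
   assert (0 < sqrt (1 + b^2 * sin t^2)) by (apply sqrt_lt_R0; lra).
   set (S := sqrt (1 + b^2 * sin t^2)) in *.
   assert (HC := sin2cos2 t).
   field_simplify; try lra.
   assert (HS2: S^2 = 1 + b ^ 2 * sin t ^ 2) by (rewrite <- HS; ring).
   replace (S^3) with (S * (1 + b ^ 2 * sin t ^ 2)) by (rewrite <- HS2; ring).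
   rewrite HC. field. split; lra. Qed.

Definition PhiF e k b g x := sqrt e * jdn (x / (2 * g)) k / sqrt (1 + b ^ 2 * (jsn (x / (2 * g)) k) ^ 2).

Lemma PhiF_Psi e k b g x : PhiF e k b g x = Psi e k b (jam (x / (2*g)) k).
Proof. reflexivity. Qed.

Lemma scalR (x y : R) : scal x y = x * y.
Proof. reflexivity. Qed.

Lemma isd_eq (f : R -> R) (x l l' : R) : is_derive f x l -> @eq R l l' -> is_derive f x l'.
Proof. intros H ->. exact H. Qed.

Lemma theta_der k g x : k^2 < 1 -> 0 < g ->
  is_derive (fun x => jam (x / (2*g)) k) x (sqrt (1 - k^2 * (sin (jam (x / (2*g)) k))^2) / (2*g)).
Proof. intros Hk Hg.
 assert (H1 : is_derive (fun x : R => x / (2*g)) x (/ (2*g))).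
 { auto_derive. auto. field. lra. }
 assert (H2 := is_derive_comp (fun v => jam v k) (fun x => x / (2*g)) x _ _ (jam_deriv k (x / (2*g)) Hk) H1).
 eapply isd_eq. exact H2.
 change scal with Rmult. simpl. change mult with Rmult. simpl. field. lra. Qed.

Definition ode_E0 om c e k b g := (k^2 + b^2) / (4 * g^2) + (om - c^2/4) + c * e / 2 - 3 * e^2 / 16.
Definition ode_E1 om c e k b g := -2 * (1 + b^2) * ((k^2 + b^2) / (4 * g^2)) + 2 * (om - c^2/4) * b^2
   + c * e * (b^2 - k^2) / 2 + 3 * e^2 * k^2 / 8.
Definition ode_E2 om c e k b g := b^2 * ((k^2 + b^2) / (4 * g^2)) + (om - c^2/4) * b^4
   - c * e * k^2 * b^2 / 2 - 3 * e^2 * k^4 / 16.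

Lemma PhiF_ode om c e k b g : 0 < e -> k^2 < 1 -> 0 < g ->
  ode_E0 om c e k b g = 0 -> ode_E1 om c e k b g = 0 -> ode_E2 om c e k b g = 0 ->
  solves_ode om c (PhiF e k b g).
Proof. intros He Hk Hg E0 E1 E2.
 exists (fun x => Psi1 e k b g (jam (x / (2*g)) k)).
 exists (fun x => dPsi1 e k b g (jam (x / (2*g)) k) * (sqrt (1 - k^2 * (sin (jam (x / (2*g)) k))^2) / (2*g))).
 intros x. set (t := jam (x / (2*g)) k).
 assert (HT := theta_der k g x Hk Hg). fold t in HT.
 split; [|split].
 - assert (H := is_derive_comp (Psi e k b) (fun x => jam (x / (2*g)) k) x _ _ (Psi_der e k b t Hk) HT).
   eapply isd_eq. exact H.
   rewrite scalR.
   fold t. unfold Psi1.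
   pose proof (hk_arg_pos k t Hk).
   assert (0 < sqrt (1 - k^2 * sin t^2)) by (apply sqrt_lt_R0; lra).
   assert (0 < 1 + b^2 * (sin t)^2) by (pose proof (pow2_ge_0 b); pose proof (pow2_ge_0 (sin t)); nra).
   assert (0 < sqrt (1 + b^2 * sin t^2)) by (apply sqrt_lt_R0; lra).
   field. repeat split; lra.
 - assert (H := is_derive_comp (Psi1 e k b g) (fun x => jam (x / (2*g)) k) x _ _ (Psi1_der e k b g t ltac:(lra)) HT).
   eapply isd_eq. exact H.
   rewrite scalR. fold t. ring.
 - change (PhiF e k b g x) with (Psi e k b t). fold t.
   rewrite !pow2_abs. replace (Rabs (Psi e k b t) ^ 4) with ((Rabs (Psi e k b t) ^ 2)^2) by ring.
   rewrite pow2_abs. unfold Psi, dPsi1.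
   pose proof (hk_arg_pos k t Hk).
   assert (HD := sqrt_sqrt (1 - k^2 * sin t^2) ltac:(lra)).
   assert (0 < sqrt (1 - k^2 * sin t^2)) by (apply sqrt_lt_R0; lra).
   assert (0 < 1 + b^2 * (sin t)^2) by (pose proof (pow2_ge_0 b); pose proof (pow2_ge_0 (sin t)); nra).
   assert (HS := sqrt_sqrt (1 + b^2 * sin t^2) ltac:(lra)).
   assert (0 < sqrt (1 + b^2 * sin t^2)) by (apply sqrt_lt_R0; lra).
   assert (HE := sqrt_sqrt e ltac:(lra)).
   set (D := sqrt (1 - k^2 * sin t^2)) in *. set (S := sqrt (1 + b^2 * sin t^2)) in *.
   set (r := sqrt e) in *. set (s := sin t) in *.
   assert (HD2: D^2 = 1 - k ^ 2 * s ^ 2) by (rewrite <- HD; ring).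
   assert (HS2: S^2 = 1 + b ^ 2 * s ^ 2) by (rewrite <- HS; ring).
   assert (Hr2: r^2 = e) by (rewrite <- HE; ring).
   set (m := (k^2 + b^2) / (4 * g^2)).
   assert (Hpoly : m * ((1 - 2 * s^2) * (1 + b^2 * s^2) - 3 * b^2 * s^2 * (1 - s^2))
       + (om - c^2/4) * (S^2)^2 + c/2 * r^2 * D^2 * S^2 - 3/16 * (r^2)^2 * (D^2)^2 = 0).
   { rewrite HD2, HS2, Hr2.
     transitivity (ode_E0 om c e k b g + ode_E1 om c e k b g * s^2 + ode_E2 om c e k b g * s^4).
     - unfold ode_E0, ode_E1, ode_E2. unfold m. field. lra.
     - rewrite E0, E1, E2. ring. }
   transitivity (r * D / S^5 * (m * ((1 - 2 * s^2) * (1 + b^2 * s^2) - 3 * b^2 * s^2 * (1 - s^2))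
       + (om - c^2/4) * (S^2)^2 + c/2 * r^2 * D^2 * S^2 - 3/16 * (r^2)^2 * (D^2)^2)).
   + unfold m. field. repeat split; lra.
   + rewrite Hpoly. ring. Qed.

Definition qf k b t := (1 - k^2 * t) / (1 + b^2 * t).

Lemma qf_pos k b t : k^2 < 1 -> 0 <= t <= 1 -> 0 < qf k b t.
Proof. intros. unfold qf. pose proof (pow2_ge_0 k). pose proof (pow2_ge_0 b).
 apply Rdiv_lt_0_compat; nra. Qed.

Lemma qf_anti k b t1 t2 : 0 < k^2 + b^2 -> 0 <= t1 -> t1 < t2 -> qf k b t2 < qf k b t1.
Proof. intros. unfold qf. pose proof (pow2_ge_0 b).
 assert (0 < 1 + b^2 * t1) by nra. assert (0 < 1 + b^2 * t2) by nra.
 apply Rminus_gt_0_lt.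
 replace ((1 - k ^ 2 * t1) / (1 + b ^ 2 * t1) - (1 - k ^ 2 * t2) / (1 + b ^ 2 * t2))
   with ((t2 - t1) * (k^2 + b^2) / ((1 + b^2 * t1) * (1 + b^2 * t2))) by (field; lra).
 apply Rdiv_lt_0_compat; nra. Qed.

Lemma qf_anti_le k b t1 t2 : 0 <= k^2 + b^2 -> 0 <= t1 -> t1 <= t2 -> qf k b t2 <= qf k b t1.
Proof. intros. unfold qf. pose proof (pow2_ge_0 b).
 assert (0 < 1 + b^2 * t1) by nra. assert (0 < 1 + b^2 * t2) by nra.
 apply Rge_le, Rminus_ge, Rle_ge.
 replace ((1 - k ^ 2 * t1) / (1 + b ^ 2 * t1) - (1 - k ^ 2 * t2) / (1 + b ^ 2 * t2))
   with ((t2 - t1) * (k^2 + b^2) / ((1 + b^2 * t1) * (1 + b^2 * t2))) by (field; lra).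
 apply Rmult_le_pos; [nra|]. apply Rlt_le, Rinv_0_lt_compat. nra. Qed.

Definition thf k g x := jam (x / (2*g)) k.

Lemma PhiF_sq e k b g x : 0 <= e -> k^2 < 1 ->
  PhiF e k b g x = sqrt (e * qf k b ((sin (thf k g x))^2)).
Proof. intros. unfold PhiF, jdn, jsn, qf, thf. set (s := sin (jam (x / (2 * g)) k)).
 pose proof (hk_arg_pos k (jam (x / (2 * g)) k) H0). fold s in H1.
 assert (0 < 1 + b^2 * s^2) by (pose proof (pow2_ge_0 b); pose proof (pow2_ge_0 s); nra).
 rewrite sqrt_mult_alt by auto. rewrite sqrt_div_alt by auto. unfold Rdiv. ring. Qed.

Lemma PhiF_sq2 e k b g x : 0 <= e -> k^2 < 1 ->
  (PhiF e k b g x)^2 = e * (jdn (x / (2 * g)) k)^2 / (1 + b^2 * (jsn (x / (2 * g)) k)^2).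
Proof. intros. unfold PhiF. set (s := jsn (x / (2 * g)) k).
 assert (0 < 1 + b^2 * s^2) by (pose proof (pow2_ge_0 b); pose proof (pow2_ge_0 s); nra).
 assert (HS := sqrt_sqrt (1 + b^2 * s^2) ltac:(lra)).
 assert (0 < sqrt (1 + b^2 * s^2)) by (apply sqrt_lt_R0; lra).
 assert (HE := sqrt_sqrt e H).
 set (D := jdn (x / (2 * g)) k). set (S := sqrt (1 + b ^ 2 * s ^ 2)) in *.
 transitivity ((sqrt e * sqrt e) * D^2 / (S * S)). field. lra.
 rewrite HE, HS. reflexivity. Qed.

Lemma sin2_bounds t : 0 <= (sin t)^2 <= 1.
Proof. split. apply pow2_ge_0. apply sin2_le1. Qed.



Lemma bump_props om c e k b g : 0 < e -> k^2 < 1 -> 0 < k^2 + b^2 -> 0 < g ->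
  solves_ode om c (PhiF e k b g) ->
  pos_single_bump_solution om c (g * Pk k) (PhiF e k b g).
Proof. intros He Hk Hkb Hg Hode.
 assert (Hs : forall x, PhiF e k b g x = sqrt (e * qf k b ((sin (thf k g x))^2)))
   by (intros; apply PhiF_sq; lra).
 assert (HL : thf k g (g * Pk k) = PI/2).
 { unfold thf. replace (g * Pk k / (2 * g)) with (Pk k / 2) by (field; lra). apply jam_half; auto. }
 assert (H0 : thf k g 0 = 0).
 { unfold thf. replace (0 / (2 * g)) with 0 by (field; lra). apply jam_0; auto. }
 split; [auto|]. split; [|split; [|split; [|split; [|split]]]].
 - intros x. rewrite !Hs. f_equal. f_equal. f_equal.
   unfold thf. replace ((x + 2 * (g * Pk k)) / (2 * g)) with (x / (2*g) + Pk k) by (field; lra).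
   rewrite jam_shift by auto. rewrite neg_sin. ring.
 - intros x. rewrite Hs. apply sqrt_lt_R0. apply Rmult_lt_0_compat; auto. apply qf_pos; auto. apply sin2_bounds.
 - intros x. rewrite !Hs. unfold thf. replace (- x / (2 * g)) with (- (x / (2*g))) by (field; lra).
   rewrite jam_odd by auto. rewrite sin_neg. f_equal. f_equal. f_equal. ring.
 - intros x. rewrite !Hs. rewrite H0, sin_0. apply sqrt_le_1_alt. apply Rmult_le_compat_l; [lra|].
   apply qf_anti_le; [lra | right; ring | replace (0^2) with 0 by ring; apply sin2_bounds].
 - intros x. rewrite !Hs. rewrite HL, sin_PI2. apply sqrt_le_1_alt. apply Rmult_le_compat_l; [lra|].
   apply qf_anti_le; [lra | apply sin2_bounds | replace (1^2) with 1 by ring; apply sin2_bounds].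
 - intros x y Hx Hxy Hy. rewrite !Hs. apply sqrt_lt_1_alt. split.
   + apply Rmult_le_pos; [lra|]. apply Rlt_le, qf_pos; auto. apply sin2_bounds.
   + apply Rmult_lt_compat_l; [lra|]. apply qf_anti; auto. apply sin2_bounds.
     assert (A1 : 0 < thf k g x).
     { rewrite <- H0. unfold thf. apply jam_strict; auto. apply Rmult_lt_compat_r; [|lra]. apply Rinv_0_lt_compat; lra. }
     assert (A2 : thf k g x < thf k g y).
     { unfold thf. apply jam_strict; auto. apply Rmult_lt_compat_r; [|lra]. apply Rinv_0_lt_compat; lra. }
     assert (A3 : thf k g y < PI/2).
     { rewrite <- HL. unfold thf. apply jam_strict; auto. apply Rmult_lt_compat_r; [|lra]. apply Rinv_0_lt_compat; lra. }
     pose proof PI_RGT_0.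
     assert (0 < sin (thf k g x)) by (apply sin_gt_0; lra).
     assert (sin (thf k g x) < sin (thf k g y)) by (apply sin_increasing_1; lra).
     nra. Qed.

Lemma Egen om c e1 e2 e3 k b g : e1 < 0 -> 0 < e2 -> e2 < e3 ->
  e1 + e2 + e3 = 4 * c -> e1 * e2 + e1 * e3 + e2 * e3 = -16 * (om - c^2/4) ->
  k^2 = - e1 * (e3 - e2) / (e3 * (e2 - e1)) -> b^2 = (e3 - e2) / (e2 - e1) ->
  g^2 = 4 / (e3 * (e2 - e1)) ->
  ode_E0 om c e3 k b g = 0 /\ ode_E1 om c e3 k b g = 0 /\ ode_E2 om c e3 k b g = 0.
Proof. intros H1 H2 H3 Hs Hp Hk Hb Hg.
 assert (Hom : om - c^2/4 = - (e1 * e2 + e1 * e3 + e2 * e3) / 16) by lra.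
 assert (Hc : c = (e1 + e2 + e3) / 4) by lra.
 assert (HG : 4 * g^2 = 16 / (e3 * (e2 - e1))) by (rewrite Hg; field; split; lra).
 unfold ode_E0, ode_E1, ode_E2.
 replace (k^4) with ((k^2)^2) by ring. replace (b^4) with ((b^2)^2) by ring.
 rewrite Hom, HG, Hk, Hb. rewrite Hc.
 split; [|split]; field; repeat split; lra. Qed.

Definition Hyp om c := c ^ 2 / 4 < om \/ (om = c ^ 2 / 4 /\ 0 < c).

Lemma hyp_facts om c : Hyp om c ->
  0 < om /\ 0 < c + 2 * sqrt om /\ c <= 2 * sqrt om.
Proof. intros H. assert (0 < om).
 { destruct H as [H|[Ha Hb]]. pose proof (pow2_ge_0 c). lra. subst. nra. }
 assert (Hw := sqrt_sqrt om ltac:(lra)). assert (0 < sqrt om) by (apply sqrt_lt_R0; lra).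
 split; auto. destruct H as [H|[Ha Hb]].
 - split; nra.
 - split. lra. subst. nra. Qed.

Definition sAf om c p := sqrt (Afun om c p).
Definition e3f om c p := (4*c - p + sAf om c p)/2.
Definition e1f om c p := (4*c - p - sAf om c p)/2.
Definition K2f om c p := - e1f om c p * (e3f om c p - p) / (e3f om c p * (p - e1f om c p)).
Definition B2f om c p := (e3f om c p - p) / (p - e1f om c p).
Definition kf om c p := sqrt (K2f om c p).
Definition bf om c p := sqrt (B2f om c p).
Definition gf om c p := 2 / sqrt (e3f om c p * (p - e1f om c p)).
Definition Lf om c p := gf om c p * Pk (kf om c p).
Definition PhiP om c p := PhiF (e3f om c p) (kf om c p) (bf om c p) (gf om c p).

Lemma sqrt_48 om c : Hyp om c -> 0 < 48 * om + 4 * c^2.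
Proof. intros H. destruct (hyp_facts om c H) as [? _]. pose proof (pow2_ge_0 c). lra. Qed.

Lemma alpha0_facts om c : Hyp om c ->
  0 < alpha0 om c /\ Afun om c (alpha0 om c) = 48 * om + 4 * c^2 /\
  alpha0 om c < 2 * c + 4 * sqrt om /\ 4 * c - sqrt (48 * om + 4 * c^2) <= 0.
Proof. intros H. destruct (hyp_facts om c H) as [Hom [Hc1 Hc2]].
 pose proof (sqrt_48 om c H).
 assert (HQ := sqrt_sqrt (48 * om + 4 * c^2) ltac:(lra)).
 assert (0 < sqrt (48 * om + 4 * c^2)) by (apply sqrt_lt_R0; lra).
 assert (Hw := sqrt_sqrt om ltac:(lra)). assert (0 < sqrt om) by (apply sqrt_lt_R0; lra).
 set (Q := sqrt (48 * om + 4 * c^2)) in *. set (w := sqrt om) in *.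
 unfold alpha0, Afun. fold Q.
 assert (HQ4 : 4 * c <= Q).
 { destruct (Rle_dec (4*c) 0). lra. apply Rsqr_incr_0_var. unfold Rsqr. rewrite HQ.
   replace om with (w*w) by auto. nra. lra. }
 split; [|split; [|split]].
 - destruct (Rle_dec 0 c). lra.
   destruct H as [H|[Ha Hb]]; [|lra].
   assert (-4 * c < Q). { apply Rsqr_incrst_0; try lra. unfold Rsqr. rewrite HQ. nra. }
   lra.
 - field_simplify. replace (Q^2) with (48 * om + 4 * c^2) by (rewrite <- HQ; ring). field.
 - assert (Q < 2 * c + 12 * w).
   { apply Rsqr_incrst_0. unfold Rsqr. rewrite HQ. replace om with (w*w) by auto. nra. lra. nra. }
   lra.
 - lra. Qed.

Lemma A_lb om c p : Hyp om c -> 0 <= p <= alpha0 om c ->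
  Rmin (64 * om) (48 * om + 4 * c^2) <= Afun om c p.
Proof. intros H Hp. destruct (alpha0_facts om c H) as [Ha [HA _]].
 set (a := alpha0 om c) in *.
 assert (Id : a * Afun om c p = (a - p) * Afun om c 0 + p * Afun om c a + 3 * a * p * (a - p))
   by (unfold Afun; ring).
 rewrite HA in Id. unfold Afun at 2 in Id.
 replace (-3 * 0 ^ 2 + 8 * c * 0 + 64 * om) with (64 * om) in Id by ring.
 set (m := Rmin (64 * om) (48 * om + 4 * c ^ 2)).
 assert (m <= 64 * om) by apply Rmin_l. assert (m <= 48 * om + 4 * c ^ 2) by apply Rmin_r.
 assert (a * m <= a * Afun om c p).
 { rewrite Id. assert (0 <= 3 * a * p * (a - p)) by (apply Rmult_le_pos; [|lra]; apply Rmult_le_pos; lra). nra. }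
 apply Rmult_le_reg_l with a; auto. Qed.

Lemma Amin_pos om c : Hyp om c -> 0 < Rmin (64 * om) (48 * om + 4 * c^2).
Proof. intros H. destruct (hyp_facts om c H) as [? _]. pose proof (sqrt_48 om c H).
 unfold Rmin. destruct (Rle_dec _ _); lra. Qed.

Lemma A_pos om c p : Hyp om c -> 0 <= p <= alpha0 om c -> 0 < Afun om c p.
Proof. intros. pose proof (A_lb om c p H H0). pose proof (Amin_pos om c H). lra. Qed.

Lemma roots om c p : Hyp om c -> 0 < p < alpha0 om c ->
  e1f om c p < 0 /\ p < e3f om c p.
Proof. intros H Hp. destruct (hyp_facts om c H) as [Hom [Hc1 Hc2]].
 destruct (alpha0_facts om c H) as [Ha [HA [Ha2 Hr]]].
 pose proof (A_pos om c p H ltac:(lra)).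
 assert (HS := sqrt_sqrt (Afun om c p) ltac:(lra)).
 assert (0 < sqrt (Afun om c p)) by (apply sqrt_lt_R0; lra).
 pose proof (sqrt_48 om c H).
 assert (HQ := sqrt_sqrt (48 * om + 4 * c^2) ltac:(lra)).
 assert (Hw := sqrt_sqrt om ltac:(lra)).
 unfold e1f, e3f, sAf. set (s := sqrt (Afun om c p)) in *.
 set (Q := sqrt (48 * om + 4 * c^2)) in *. set (w := sqrt om) in *.
 assert (Haq : alpha0 om c = (4 * c + Q) / 3) by (unfold alpha0; fold Q; field).
 unfold Afun in HS. split.
 - destruct (Rle_dec (4*c - p) 0). lra.
   assert (4 * c - p < s).
   { apply Rsqr_incrst_0; try lra. unfold Rsqr. rewrite HS.
     assert (0 < (p - (2*c - 4*w)) * (2*c + 4*w - p)) by (apply Rmult_lt_0_compat; lra).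
     replace om with (w*w) by auto. nra. }
   lra.
 - destruct (Rle_dec (3*p - 4*c) 0). lra.
   assert (3 * p - 4 * c < s).
   { apply Rsqr_incrst_0; try lra. unfold Rsqr. rewrite HS.
     assert (Hneg : 0 < (alpha0 om c - p) * (p - (4*c - Q)/3)).
     { apply Rmult_lt_0_compat; lra. }
     rewrite Haq in Hneg. nra. }
   lra. Qed.

Lemma params om c p : Hyp om c -> 0 < p < alpha0 om c ->
  0 < e3f om c p /\ 0 < K2f om c p < 1 /\ 0 < B2f om c p /\ 0 < e3f om c p * (p - e1f om c p) /\
  (kf om c p)^2 = K2f om c p /\ (bf om c p)^2 = B2f om c p /\
  (gf om c p)^2 = 4 / (e3f om c p * (p - e1f om c p)) /\ 0 < gf om c p /\ 0 < kf om c p < 1 /\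
  e1f om c p + p + e3f om c p = 4 * c /\
  e1f om c p * p + e1f om c p * e3f om c p + p * e3f om c p = -16 * (om - c^2/4).
Proof. intros H Hp. destruct (roots om c p H Hp) as [H1 H3].
 pose proof (A_pos om c p H ltac:(lra)).
 assert (HS := sqrt_sqrt (Afun om c p) ltac:(lra)).
 assert (HK : 0 < K2f om c p < 1).
 { unfold K2f. split.
   - apply Rdiv_lt_0_compat; [|apply Rmult_lt_0_compat]; nra.
   - apply Rmult_lt_reg_r with (e3f om c p * (p - e1f om c p)). nra.
     unfold Rdiv. rewrite Rmult_assoc, Rinv_l by nra. nra. }
 assert (HB : 0 < B2f om c p) by (unfold B2f; apply Rdiv_lt_0_compat; lra).
 assert (HP : 0 < e3f om c p * (p - e1f om c p)) by nra.
 assert (0 < sqrt (e3f om c p * (p - e1f om c p))) by (apply sqrt_lt_R0; lra).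
 split; [lra|]. split; [auto|]. split; [auto|]. split; [auto|].
 split; [unfold kf; apply pow2_sqrt; lra|].
 split; [unfold bf; apply pow2_sqrt; lra|].
 split. { unfold gf. unfold Rdiv. rewrite Rpow_mult_distr, pow_inv, pow2_sqrt by lra. field. lra. }
 split. { unfold gf. apply Rdiv_lt_0_compat; lra. }
 split. { unfold kf. split. apply sqrt_lt_R0; lra. rewrite <- sqrt_1. apply sqrt_lt_1_alt. lra. }
 unfold e1f, e3f, sAf. split. field.
 unfold sAf in HS. set (s := sqrt (Afun om c p)) in *. unfold Afun in HS.
 replace (- 16 * (om - c^2/4)) with (- 16 * (om - c^2/4) - /4 * (s * s - (-3 * p ^ 2 + 8 * c * p + 64 * om))) by (rewrite HS; ring).
 field. Qed.

Lemma PhiP_ode om c p : Hyp om c -> 0 < p < alpha0 om c -> solves_ode om c (PhiP om c p).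
Proof. intros H Hp.
 destruct (params om c p H Hp) as [He3 [HK [HB [HP [Hk [Hb [Hg [Hg0 [Hk1 [Hsum Hprod]]]]]]]]]].
 destruct (roots om c p H Hp) as [H1 H3].
 destruct (Egen om c (e1f om c p) p (e3f om c p) (kf om c p) (bf om c p) (gf om c p)) as [E0 [E1 E2]];
   try lra.
 - rewrite Hk. reflexivity.
 - rewrite Hb. reflexivity.
 - unfold PhiP. apply PhiF_ode; auto. rewrite Hk. lra. Qed.

Lemma PhiP_bump om c p : Hyp om c -> 0 < p < alpha0 om c ->
  pos_single_bump_solution om c (Lf om c p) (PhiP om c p).
Proof. intros H Hp.
 destruct (params om c p H Hp) as [He3 [HK [HB [HP [Hk [Hb [Hg [Hg0 [Hk1 [Hsum Hprod]]]]]]]]]].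
 unfold Lf, PhiP. apply bump_props; auto; try (rewrite ?Hk, ?Hb; lra).
 apply PhiP_ode; auto. Qed.

Lemma cont_eps (f : R -> R) x :
  (forall eps, 0 < eps -> exists del, 0 < del /\ forall y, Rabs (y - x) < del -> Rabs (f y - f x) < eps) ->
  continuous f x.
Proof. intros H. apply continuity_pt_filterlim.
 unfold continuity_pt, continue_in, limit1_in, limit_in. intros eps Heps.
 destruct (H eps Heps) as [d [Hd Hf]]. exists d. split; auto.
 intros y [_ Hy]. simpl in *. unfold R_dist in *. apply Hf; auto. Qed.

Section Lims.
Context {T : Type} {F : (T -> Prop) -> Prop} {FF : Filter F}.

Lemma lim_mult (f g : T -> R) a b : filterlim f F (locally a) -> filterlim g F (locally b) ->
  filterlim (fun x => f x * g x) F (locally (a * b)).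
Proof. intros Hf Hg. eapply filterlim_comp_2; [exact Hf | exact Hg |].
 apply (filterlim_mult (K:=R_AbsRing) a b). Qed.

Lemma lim_plus (f g : T -> R) a b : filterlim f F (locally a) -> filterlim g F (locally b) ->
  filterlim (fun x => f x + g x) F (locally (a + b)).
Proof. intros Hf Hg. eapply filterlim_comp_2; [exact Hf | exact Hg |].
 apply (filterlim_plus (K:=R_AbsRing) (V:=R_NormedModule) a b). Qed.

Lemma lim_cont (h : R -> R) (f : T -> R) a : continuous h a -> filterlim f F (locally a) ->
  filterlim (fun x => h (f x)) F (locally (h a)).
Proof. intros Hh Hf. eapply filterlim_comp; [exact Hf | exact Hh]. Qed.

Lemma lim_const (a : R) : filterlim (fun _ : T => a) F (locally a).
Proof. apply filterlim_const. Qed.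

Lemma lim_ext (f g : T -> R) a : F (fun x => f x = g x) -> filterlim f F (locally a) ->
  filterlim g F (locally a).
Proof. intros He Hf. eapply filterlim_ext_loc; eauto. Qed.

Lemma lim_eq (f : T -> R) a b : a = b -> filterlim f F (locally a) -> filterlim f F (locally b).
Proof. intros ->; auto. Qed.

Lemma lim_inv (f : T -> R) a : a <> 0 -> filterlim f F (locally a) -> filterlim (fun x => / f x) F (locally (/ a)).
Proof. intros Ha Hf. apply (lim_cont Rinv); auto.
 apply (ex_derive_continuous (K:=R_AbsRing) (V:=R_NormedModule)). auto_derive. auto. Qed.

Lemma lim_sqrt (f : T -> R) a : filterlim f F (locally a) -> filterlim (fun x => sqrt (f x)) F (locally (sqrt a)).
Proof. intros Hf. apply (lim_cont sqrt); auto. apply continuous_sqrt. Qed.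

Lemma lim_sin (f : T -> R) a : filterlim f F (locally a) -> filterlim (fun x => sin (f x)) F (locally (sin a)).
Proof. intros Hf. apply (lim_cont sin); auto.
 apply (ex_derive_continuous (K:=R_AbsRing) (V:=R_NormedModule)). auto_derive. auto. Qed.

Lemma lim_eps (f : T -> R) a :
  (forall eps, 0 < eps -> F (fun x => Rabs (f x - a) < eps)) -> filterlim f F (locally a).
Proof. intros H. apply filterlim_locally. intros eps. apply (H eps (cond_pos eps)). Qed.

Lemma lim_eps_inv (f : T -> R) a : filterlim f F (locally a) ->
  forall eps, 0 < eps -> F (fun x => Rabs (f x - a) < eps).
Proof. intros H eps Heps. apply filterlim_locally with (eps := mkposreal eps Heps) in H. exact H. Qed.

End Lims.

Lemma lim_right (f : R -> R) : continuous f 0 -> filterlim f (at_right 0) (locally (f 0)).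
Proof. intros H. eapply filterlim_filter_le_1; [apply filter_le_within | exact H]. Qed.

Lemma exd_sAf om c p : 0 < Afun om c p -> ex_derive (sAf om c) p.
Proof. intros H. unfold sAf, Afun in *. auto_derive. lra. Qed.

Lemma exd_e3f om c p : 0 < Afun om c p -> ex_derive (e3f om c) p.
Proof. intros H. unfold e3f. auto_derive. apply exd_sAf; auto. Qed.

Lemma exd_e1f om c p : 0 < Afun om c p -> ex_derive (e1f om c) p.
Proof. intros H. unfold e1f. auto_derive. apply exd_sAf; auto. Qed.

Lemma exd_K2f om c p : 0 < Afun om c p -> e3f om c p <> 0 -> p - e1f om c p <> 0 ->
  ex_derive (K2f om c) p.
Proof. intros H H1 H2. unfold K2f.
 assert (Hd1 := exd_e1f om c p H). assert (Hd3 := exd_e3f om c p H).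
 auto_derive. repeat split; auto. Qed.

Lemma exd_gf om c p : 0 < Afun om c p -> 0 < e3f om c p * (p - e1f om c p) ->
  ex_derive (gf om c) p.
Proof. intros H H1. unfold gf.
 assert (Hd1 := exd_e1f om c p H). assert (Hd3 := exd_e3f om c p H).
 auto_derive. replace (p + - e1f om c p) with (p - e1f om c p) by ring. repeat split; auto. apply Rgt_not_eq, sqrt_lt_R0; auto. Qed.

Lemma inv_sqrt_lip m a b : 0 < m <= 1 -> m <= a <= 1 -> m <= b <= 1 ->
  Rabs (/ sqrt a - / sqrt b) <= Rabs (a - b) / m^2.
Proof. intros Hm Ha Hb.
 assert (Hsm := sqrt_sqrt m ltac:(lra)).
 assert (0 < sqrt m) by (apply sqrt_lt_R0; lra).
 assert (sqrt m <= sqrt a) by (apply sqrt_le_1_alt; lra).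
 assert (sqrt m <= sqrt b) by (apply sqrt_le_1_alt; lra).
 assert (m <= sqrt m).
 { assert (sqrt m <= 1) by (rewrite <- sqrt_1; apply sqrt_le_1_alt; lra). nra. }
 assert (HA := sqrt_sqrt a ltac:(lra)). assert (HB := sqrt_sqrt b ltac:(lra)).
 set (x := sqrt a) in *. set (y := sqrt b) in *. set (s := sqrt m) in *.
 replace (/ x - / y) with ((b - a) / (x * y * (x + y))).
 2:{ rewrite <- HA, <- HB. field. lra. }
 rewrite Rabs_div by nra. rewrite (Rabs_right (x * y * (x + y))) by nra.
 replace (Rabs (b - a)) with (Rabs (a - b)) by (rewrite <- Rabs_Ropp; f_equal; ring).
 unfold Rdiv. apply Rmult_le_compat_l. apply Rabs_pos.
 apply Rinv_le_contravar. nra.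
 assert (m * m <= s * s * (s + s)) by nra.
 assert (s * s * (s + s) <= x * y * (x + y)).
 { apply Rmult_le_compat; nra. }
 nra. Qed.

Definition EK q := RInt (fun t => / sqrt (1 - q * (sin t)^2)) 0 PI.

Lemma argq_pos q t : q < 1 -> 0 < 1 - q * (sin t)^2.
Proof. intros. pose proof (sin2_bounds t). destruct (Rle_dec q 0); nra. Qed.

Lemma exRq q a b : q < 1 -> ex_RInt (fun t => / sqrt (1 - q * (sin t)^2)) a b.
Proof. intros H. apply (ex_RInt_continuous (V:=R_CompleteNormedModule)). intros z _.
 pose proof (argq_pos q z H).
 apply (ex_derive_continuous (K:=R_AbsRing) (V:=R_NormedModule)). auto_derive.
 split. lra. split; [|exact I]. apply Rgt_not_eq, sqrt_lt_R0. lra. Qed.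

Lemma EK_lip q q' kap : 0 <= q <= kap -> 0 <= q' <= kap -> kap < 1 ->
  Rabs (EK q - EK q') <= PI * (Rabs (q - q') / (1 - kap)^2).
Proof. intros Hq Hq' Hk. unfold EK.
 assert (E := RInt_minus (fun t => / sqrt (1 - q * (sin t)^2)) (fun t => / sqrt (1 - q' * (sin t)^2)) 0 PI
   (exRq q 0 PI ltac:(lra)) (exRq q' 0 PI ltac:(lra))).
 change minus with Rminus in E.
 rewrite <- E. replace PI with (PI - 0) at 2 by ring.
 apply abs_RInt_le_const. pose proof PI_RGT_0; lra.
 apply (ex_RInt_minus (V:=R_NormedModule)); apply exRq; lra.
 intros t _. change minus with Rminus. cbv beta. pose proof (sin2_bounds t).
 eapply Rle_trans. apply (inv_sqrt_lip (1 - kap)); nra.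
 unfold Rdiv. apply Rmult_le_compat_r. apply Rlt_le, Rinv_0_lt_compat. nra.
 replace (1 - q * sin t ^ 2 - (1 - q' * sin t ^ 2)) with ((q' - q) * sin t ^2) by ring.
 rewrite Rabs_mult, (Rabs_right (sin t ^ 2)) by lra.
 replace (Rabs (q' - q)) with (Rabs (q - q')) by (rewrite <- Rabs_Ropp; f_equal; ring).
 pose proof (Rabs_pos (q - q')). nra. Qed.

Lemma EK_cont q0 : 0 < q0 < 1 -> continuous EK q0.
Proof. intros Hq. apply cont_eps. intros eps Heps.
 set (kap := (1 + q0)/2).
 pose proof PI_RGT_0.
 exists (Rmin (q0/2) (Rmin ((1 - q0)/2) (eps * (1 - kap)^2 / (PI + 1)))).
 assert (0 < (1 - kap)^2) by (unfold kap; nra).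
 split. { apply Rmin_pos. lra. apply Rmin_pos. lra. apply Rdiv_lt_0_compat; [nra|lra]. }
 intros y Hy.
 assert (H1 := Rmin_l (q0/2) (Rmin ((1 - q0)/2) (eps * (1 - kap)^2 / (PI + 1)))).
 assert (H2 := Rmin_r (q0/2) (Rmin ((1 - q0)/2) (eps * (1 - kap)^2 / (PI + 1)))).
 assert (H3 := Rmin_l ((1 - q0)/2) (eps * (1 - kap)^2 / (PI + 1))).
 assert (H4 := Rmin_r ((1 - q0)/2) (eps * (1 - kap)^2 / (PI + 1))).
 assert (Hy2 : Rabs (y - q0) < eps * (1 - kap)^2 / (PI + 1)) by lra.
 assert (Hyb : Rabs (y - q0) < q0/2) by lra.
 assert (Hyc : Rabs (y - q0) < (1 - q0)/2) by lra.
 apply Rabs_def2 in Hyb. apply Rabs_def2 in Hyc.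
 eapply Rle_lt_trans. apply (EK_lip y q0 kap); unfold kap; lra.
 apply Rmult_lt_reg_r with ((1 - kap)^2 / PI). apply Rdiv_lt_0_compat; lra.
 replace (PI * (Rabs (y - q0) / (1 - kap) ^ 2) * ((1 - kap) ^ 2 / PI)) with (Rabs (y - q0)) by (field; repeat split; unfold kap in *; lra).
 apply Rlt_le_trans with (eps * (1 - kap)^2 / (PI + 1)). auto.
 unfold Rdiv. rewrite Rmult_assoc. apply Rmult_le_compat_l. lra.
 apply Rmult_le_compat_l. lra. apply Rinv_le_contravar; lra. Qed.

Lemma sqr_sqrt_max q : (sqrt q)^2 = Rmax 0 q.
Proof. unfold Rmax. destruct (Rle_dec 0 q). apply pow2_sqrt; auto.
 rewrite sqrt_neg_0 by lra. ring. Qed.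

Lemma Pk_EK k : Pk k = EK (Rmax 0 (k^2)).
Proof. unfold Pk, ellF, EK. rewrite Rmax_right by apply pow2_ge_0. reflexivity. Qed.

Lemma Lf_EK om c p : Lf om c p = gf om c p * EK (Rmax 0 (K2f om c p)).
Proof. unfold Lf. rewrite Pk_EK. unfold kf. rewrite sqr_sqrt_max. f_equal. f_equal.
 unfold Rmax. destruct (Rle_dec 0 (K2f om c p)); destruct (Rle_dec 0 _); lra. Qed.

Definition G1 t := ln ((1 + sin t) / cos t).

Lemma G1_der t : - (PI/2) < t < PI/2 -> is_derive G1 t (hk 1 t).
Proof. intros Ht. pose proof (cos_gt_0 t (proj1 Ht) (proj2 Ht)).
 pose proof (SIN_bound t).
 assert (0 < 1 + sin t).
 { destruct (Req_dec (sin t) (-1)); [|lra].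
   pose proof (sin2_cos2 t). unfold Rsqr in *. rewrite H1 in H2. nra. }
 assert (HC := sin2cos2 t).
 unfold G1. auto_derive.
 - repeat split; intros; try (apply Rdiv_lt_0_compat); lra.
 - unfold hk. replace (1 - 1^2 * sin t ^ 2) with (cos t ^ 2) by lra.
   rewrite sqrt_pow2 by lra. transitivity ((cos t * cos t + (1 + sin t) * sin t) / (cos t * (1 + sin t))). field. lra. replace (cos t * cos t) with (1 - sin t * sin t) by nra. field. lra. Qed.

Lemma hk1_cont t : - (PI/2) < t < PI/2 -> continuous (hk 1) t.
Proof. intros Ht. pose proof (cos_gt_0 t (proj1 Ht) (proj2 Ht)). apply hk_cont.
 pose proof (sin2cos2 t). nra. Qed.

Lemma ellF1_G1 th : 0 <= th < PI/2 -> ellF 1 th = G1 th.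
Proof. intros Ht. pose proof PI_RGT_0.
 rewrite ellF_eq. apply is_RInt_unique.
 assert (HG0 : G1 0 = 0).
 { unfold G1. rewrite sin_0, cos_0. replace ((1 + 0) / 1) with 1 by field. apply ln_1. }
 assert (E : @eq R (minus (G1 th) (G1 0)) (G1 th)) by (rewrite HG0; change minus with Rminus; ring).
 rewrite <- E.
 apply (is_RInt_derive (V:=R_CompleteNormedModule)).
 - intros x Hx. rewrite Rmin_left in Hx by lra. rewrite Rmax_right in Hx by lra.
   apply G1_der. lra.
 - intros x Hx. rewrite Rmin_left in Hx by lra. rewrite Rmax_right in Hx by lra.
   apply hk1_cont. lra. Qed.

Definition gd v := atan (sinh v).

Lemma cosh_pos v : 0 < cosh v.
Proof. unfold cosh. pose proof (exp_pos v). pose proof (exp_pos (-v)). lra. Qed.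

Lemma cosh_sinh v : (cosh v)^2 = 1 + (sinh v)^2.
Proof. unfold cosh, sinh. rewrite exp_Ropp. pose proof (exp_pos v). field. lra. Qed.

Lemma sin_gd v : sin (gd v) = sinh v / cosh v.
Proof. unfold gd. rewrite sin_atan. unfold Rsqr. replace (1 + sinh v * sinh v) with ((cosh v)^2)
  by (rewrite cosh_sinh; ring). rewrite sqrt_pow2 by (apply Rlt_le, cosh_pos). reflexivity. Qed.

Lemma cos_gd v : cos (gd v) = 1 / cosh v.
Proof. unfold gd. rewrite cos_atan. unfold Rsqr. replace (1 + sinh v * sinh v) with ((cosh v)^2)
  by (rewrite cosh_sinh; ring). rewrite sqrt_pow2 by (apply Rlt_le, cosh_pos). reflexivity. Qed.

Lemma gd_range v : 0 <= v -> 0 <= gd v < PI/2.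
Proof. intros Hv. unfold gd. split.
 - assert (0 <= sinh v). { unfold sinh. pose proof (exp_increasing (-v) v).
     destruct (Req_dec v 0). subst. rewrite Ropp_0. lra. assert (exp (-v) < exp v) by (apply H; lra). lra. }
   destruct (Req_dec (sinh v) 0). rewrite H0, atan_0; lra.
   rewrite <- atan_0. left. apply atan_increasing. lra.
 - pose proof (atan_bound (sinh v)). lra. Qed.

Lemma G1_gd v : G1 (gd v) = v.
Proof. unfold G1. rewrite sin_gd, cos_gd. pose proof (cosh_pos v).
 replace ((1 + sinh v / cosh v) / (1 / cosh v)) with (cosh v + sinh v) by (field; lra).
 replace (cosh v + sinh v) with (exp v) by (unfold cosh, sinh; field). apply ln_exp. Qed.

Lemma ellF1_gd v : 0 <= v -> ellF 1 (gd v) = v.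
Proof. intros. rewrite ellF1_G1 by (apply gd_range; auto). apply G1_gd. Qed.

Lemma ellF_k_le_1 k th : k^2 < 1 -> 0 <= th < PI/2 ->
  ellF k th <= ellF 1 th /\ ellF 1 th - ellF k th <= th * ((1 - k^2) / (cos th)^4).
Proof. intros Hk Ht. pose proof PI_RGT_0.
 assert (Hc : 0 < cos th) by (apply cos_gt_0; lra).
 assert (Hc1 : cos th <= 1) by (pose proof (COS_bound th); lra).
 assert (Hex1 : ex_RInt (hk 1) 0 th).
 { apply (ex_RInt_continuous (V:=R_CompleteNormedModule)). intros z Hz.
   rewrite Rmin_left in Hz by lra. rewrite Rmax_right in Hz by lra. apply hk1_cont; lra. }
 assert (Hexk := exR k 0 th Hk).
 assert (E := RInt_minus (hk 1) (hk k) 0 th Hex1 Hexk). change minus with Rminus in E.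
 rewrite !ellF_eq.
 assert (Hpt : forall t, 0 <= t <= th -> 0 <= hk 1 t - hk k t <= (1 - k^2) / (cos th)^4).
 { intros t Htt.
   assert (Hst : 0 <= sin t <= sin th).
   { split. apply sin_ge_0; lra. apply sin_incr_1; lra. }
   assert (HC := sin2cos2 th). pose proof (pow2_ge_0 k). pose proof (sin2_bounds t).
   assert (Hm : cos th ^2 <= 1 - 1^2 * sin t ^ 2) by nra.
   assert (Hm2 : 1 - 1^2 * sin t ^ 2 <= 1 - k^2 * sin t ^ 2) by nra.
   assert (0 < cos th ^ 2) by nra.
   assert (Hl := inv_sqrt_lip (cos th ^2) (1 - 1^2 * sin t ^ 2) (1 - k^2 * sin t ^ 2)
            ltac:(split; nra) ltac:(split; nra) ltac:(split; nra)).
   unfold hk.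
   assert (Hord : / sqrt (1 - k^2 * sin t ^ 2) <= / sqrt (1 - 1^2 * sin t ^ 2)).
   { apply Rinv_le_contravar. apply sqrt_lt_R0; nra. apply sqrt_le_1_alt; nra. }
   split; [lra|].
   rewrite Rabs_right in Hl by lra.
   replace (1 - 1 ^ 2 * sin t ^ 2 - (1 - k ^ 2 * sin t ^ 2)) with (- ((1 - k^2) * sin t ^ 2)) in Hl by ring.
   rewrite Rabs_Ropp, Rabs_right in Hl by nra.
   replace ((cos th ^ 2) ^ 2) with (cos th ^ 4) in Hl by ring.
   eapply Rle_trans; [exact Hl|]. unfold Rdiv. apply Rmult_le_compat_r.
   apply Rlt_le, Rinv_0_lt_compat; nra. nra. }
 split.
 - apply RInt_le; auto; try lra. intros t Htt. pose proof (Hpt t ltac:(lra)). lra.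
 - rewrite <- E. replace th with (th - 0) at 2 by ring. 
   eapply Rle_trans; [apply Rle_abs|].
   apply abs_RInt_le_const; try lra.
   apply (ex_RInt_minus (V:=R_NormedModule)); auto.
   intros t Htt. pose proof (Hpt t Htt). rewrite Rabs_right; lra. Qed.

Lemma one_minus_K2 om c p : Hyp om c -> 0 < p < alpha0 om c ->
  1 - K2f om c p = p * sAf om c p / (e3f om c p * (p - e1f om c p)).
Proof. intros H Hp. destruct (params om c p H Hp) as [He3 [HK [HB [HP _]]]].
 destruct (roots om c p H Hp) as [H1 H3].
 assert (E : sAf om c p = e3f om c p - e1f om c p) by (unfold e3f, e1f; field).
 rewrite E. unfold K2f. field. split; lra. Qed.

Lemma Pk_ub k : k^2 < 1 -> Pk k <= PI / sqrt (1 - k^2).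
Proof. intros. pose proof PI_RGT_0. pose proof (ellF_ub k 0 PI H ltac:(lra)).
 rewrite ellF_0 in H1. unfold Pk. unfold Rdiv. lra. Qed.

Lemma Pk_lb k : k^2 < 1 -> PI <= Pk k.
Proof. intros. pose proof PI_RGT_0. pose proof (ellF_lb k 0 PI H ltac:(lra)).
 rewrite ellF_0 in H1. unfold Pk. lra. Qed.

Lemma sAf_pos om c p : Hyp om c -> 0 <= p <= alpha0 om c -> 0 < sAf om c p.
Proof. intros. unfold sAf. apply sqrt_lt_R0. apply A_pos; auto. Qed.

Lemma Lf_ub om c p : Hyp om c -> 0 < p < alpha0 om c ->
  Lf om c p <= 2 * PI / sqrt (p * sAf om c p).
Proof. intros H Hp. destruct (params om c p H Hp) as [He3 [HK [HB [HP [Hk [Hb [Hg [Hg0 [Hk1 _]]]]]]]]].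
 pose proof (sAf_pos om c p H ltac:(lra)).
 assert (Hk2 : (kf om c p)^2 < 1) by lra.
 pose proof (Pk_ub _ Hk2). rewrite Hk in H1. rewrite one_minus_K2 in H1 by auto.
 unfold Lf. rewrite sqrt_div_alt in H1 by auto.
 assert (0 < sqrt (e3f om c p * (p - e1f om c p))) by (apply sqrt_lt_R0; lra).
 assert (0 < sqrt (p * sAf om c p)) by (apply sqrt_lt_R0; nra).
 eapply Rle_trans. apply Rmult_le_compat_l. lra. exact H1.
 unfold gf. right. field. split; lra. Qed.

Lemma Rmax0_cont x : continuous (fun q => Rmax 0 q) x.
Proof. apply cont_eps. intros eps He. exists eps. split; auto. intros y Hy.
 apply Rabs_def2 in Hy. apply Rabs_def1;
 unfold Rmax; destruct (Rle_dec 0 y); destruct (Rle_dec 0 x); lra. Qed.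

Lemma Lf_cont om c p : Hyp om c -> 0 < p < alpha0 om c -> continuous (Lf om c) p.
Proof. intros H Hp. destruct (params om c p H Hp) as [He3 [HK [HB [HP _]]]].
 destruct (roots om c p H Hp) as [H1 H3]. pose proof (A_pos om c p H ltac:(lra)).
 apply continuous_ext with (f := fun p => gf om c p * EK (Rmax 0 (K2f om c p))).
 { intros; symmetry; apply Lf_EK. }
 apply (continuous_mult (K:=R_AbsRing)).
 - apply (ex_derive_continuous (K:=R_AbsRing) (V:=R_NormedModule)). apply exd_gf; auto.
 - apply (continuous_comp (fun p => Rmax 0 (K2f om c p)) EK).
   + apply (continuous_comp (K2f om c) (fun q => Rmax 0 q)).
     * apply (ex_derive_continuous (K:=R_AbsRing) (V:=R_NormedModule)). apply exd_K2f; lra.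
     * apply Rmax0_cont.
   + rewrite Rmax_right by lra. apply EK_cont. auto. Qed.

Lemma cont_eps_inv (f : R -> R) x : continuous f x ->
  forall eps, 0 < eps -> exists del, 0 < del /\ forall y, Rabs (y - x) < del -> Rabs (f y - f x) < eps.
Proof. intros H eps He. apply continuity_pt_filterlim in H.
 destruct (H eps He) as [d [Hd Hf]]. exists d. split; auto.
 intros y Hy. destruct (Req_dec y x). subst. rewrite Rminus_eq_0, Rabs_R0. auto.
 apply Hf. split. split. exact I. auto. simpl. unfold R_dist. auto. Qed.

Lemma vals0 om c : Hyp om c ->
  sAf om c 0 = 8 * sqrt om /\ e3f om c 0 = 2 * c + 4 * sqrt om /\ e1f om c 0 = 2 * c - 4 * sqrt om
  /\ 0 < Afun om c 0.
Proof. intros H. destruct (hyp_facts om c H) as [Hom [Hc1 Hc2]].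
 assert (E : sAf om c 0 = 8 * sqrt om).
 { unfold sAf, Afun. replace (-3 * 0 ^ 2 + 8 * c * 0 + 64 * om) with (8^2 * om) by ring.
   rewrite sqrt_mult_alt by nra. rewrite sqrt_pow2 by lra. reflexivity. }
 unfold e3f, e1f. rewrite E. split; auto. split; [field|]. split; [field|].
 unfold Afun. lra. Qed.

Lemma Lf_big om c : Hyp om c -> forall M q, 0 < q ->
  exists p, 0 < p < q /\ p < alpha0 om c /\ M < Lf om c p.
Proof. intros H M q Hq. destruct (hyp_facts om c H) as [Hom [Hc1 Hc2]].
 destruct (vals0 om c H) as [Es [E3 [E1 HA0]]].
 destruct (alpha0_facts om c H) as [Ha _].
 assert (Hw := sqrt_sqrt om ltac:(lra)). assert (0 < sqrt om) by (apply sqrt_lt_R0; lra).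
 pose proof PI_RGT_0.
 destruct H as [Hh1|[Hh1 Hh2]].
 -
   assert (Hc3 : c < 2 * sqrt om) by nra.
   assert (HX0 : 0 < e3f om c 0 * (0 - e1f om c 0)) by (rewrite E3, E1; nra).
   assert (Cg := ex_derive_continuous (K:=R_AbsRing) (V:=R_NormedModule) _ _ (exd_gf om c 0 HA0 HX0)).
   assert (CK := ex_derive_continuous (K:=R_AbsRing) (V:=R_NormedModule) _ _
                  (exd_K2f om c 0 HA0 ltac:(rewrite E3; lra) ltac:(rewrite E1; lra))).
   assert (HK0 : K2f om c 0 = 1) by (unfold K2f; field; rewrite E3, E1; split; lra).
   set (g0 := gf om c 0).
   assert (Hg0 : 0 < g0).
   { unfold g0, gf. apply Rdiv_lt_0_compat. lra. apply sqrt_lt_R0. lra. }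
   set (V := 2 * (Rabs M + 1) / g0 + 1).
   assert (HV : 0 <= V). { unfold V. pose proof (Rabs_pos M). assert (0 < 2 * (Rabs M + 1) / g0) by (apply Rdiv_lt_0_compat; lra). lra. }
   set (th := gd V). destruct (gd_range V HV) as [Ht1 Ht2]. fold th in Ht1, Ht2.
   assert (Hct : 0 < cos th) by (apply cos_gt_0; lra).
   set (C0 := th / (cos th)^4 + 1).
   assert (HC0 : 0 < C0). { unfold C0. assert (0 <= th / cos th ^ 4) by (apply Rmult_le_pos; [lra|]; apply Rlt_le, Rinv_0_lt_compat; apply pow_lt; lra). lra. }
   destruct (cont_eps_inv _ _ Cg (g0/2) ltac:(lra)) as [d1 [Hd1 Hg]].
   destruct (cont_eps_inv _ _ CK (1 / C0) ltac:(apply Rdiv_lt_0_compat; lra)) as [d2 [Hd2 HK]].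
   set (p := Rmin (Rmin d1 d2) (Rmin q (alpha0 om c)) / 2).
   assert (Hp0 : 0 < p). { unfold p. apply Rdiv_lt_0_compat; [|lra]. repeat apply Rmin_pos; lra. }
   assert (Hpd1 : p < d1). { unfold p. pose proof (Rmin_l (Rmin d1 d2) (Rmin q (alpha0 om c))). pose proof (Rmin_l d1 d2). lra. }
   assert (Hpd2 : p < d2). { unfold p. pose proof (Rmin_l (Rmin d1 d2) (Rmin q (alpha0 om c))). pose proof (Rmin_r d1 d2). lra. }
   assert (Hpq : p < q). { unfold p. pose proof (Rmin_r (Rmin d1 d2) (Rmin q (alpha0 om c))). pose proof (Rmin_l q (alpha0 om c)). lra. }
   assert (Hpa : p < alpha0 om c). { unfold p. pose proof (Rmin_r (Rmin d1 d2) (Rmin q (alpha0 om c))). pose proof (Rmin_r q (alpha0 om c)). lra. }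
   exists p. split; [lra|]. split; [auto|].
   assert (Hgp := Hg p ltac:(rewrite Rminus_0_r, Rabs_right; lra)). fold g0 in Hgp.
   assert (HKp := HK p ltac:(rewrite Rminus_0_r, Rabs_right; lra)). rewrite HK0 in HKp.
   apply Rabs_def2 in Hgp. apply Rabs_def2 in HKp.
   destruct (params om c p (or_introl Hh1) ltac:(lra)) as [He3 [HKr [HB [HP [Hk [Hb [Hgg [Hgp0 [Hk1 _]]]]]]]]].
   assert (Hk2 : (kf om c p)^2 < 1) by lra.
   destruct (ellF_k_le_1 (kf om c p) th Hk2 ltac:(lra)) as [_ Hle].
   assert (HF1 : ellF 1 th = V) by (apply ellF1_gd; auto). rewrite HF1 in Hle. rewrite Hk in Hle.
   assert (Hmono : ellF (kf om c p) th <= Pk (kf om c p)).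
   { unfold Pk. apply ellF_mono; auto. lra. }
   assert (Hsmall : th * ((1 - K2f om c p) / cos th ^ 4) <= 1).
   { assert (0 < 1 - K2f om c p) by lra.
     assert ((1 - K2f om c p) * C0 < 1).
     { apply Rmult_lt_reg_r with (/ C0). apply Rinv_0_lt_compat; lra.
       rewrite Rmult_assoc, Rinv_r, Rmult_1_r by lra. unfold Rdiv in HKp. lra. }
     unfold C0 in H2. unfold Rdiv. nra. }
   unfold Lf.
   assert (HPk : V - 1 <= Pk (kf om c p)) by lra.
   assert (0 < V - 1). { unfold V. assert (0 < 2 * (Rabs M + 1) / g0) by (apply Rdiv_lt_0_compat; pose proof (Rabs_pos M); lra). lra. }
   apply Rlt_le_trans with (g0 / 2 * (V - 1)).
   + unfold V. replace (2 * (Rabs M + 1) / g0 + 1 - 1) with (2 * (Rabs M + 1) / g0) by ring.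
     replace (g0 / 2 * (2 * (Rabs M + 1) / g0)) with (Rabs M + 1) by (field; lra).
     pose proof (Rle_abs M). lra.
   + apply Rmult_le_compat; lra.
 -
   assert (Hc3 : c = 2 * sqrt om).
   { subst om. replace (c^2/4) with ((c/2)^2) by field. rewrite sqrt_pow2 by lra. field. }
   assert (HX0 : e3f om c 0 * (0 - e1f om c 0) = 0) by (rewrite E1, Hc3; ring).
   assert (CX : continuous (fun p => e3f om c p * (p - e1f om c p)) 0).
   { apply (ex_derive_continuous (K:=R_AbsRing) (V:=R_NormedModule)).
     assert (Hd1 := exd_e1f om c 0 HA0). assert (Hd3 := exd_e3f om c 0 HA0).
     auto_derive. repeat split; auto. }
   set (eps := (2 * PI / (Rabs M + 1))^2).
   assert (Heps : 0 < eps). { unfold eps. apply pow_lt. apply Rdiv_lt_0_compat. lra. pose proof (Rabs_pos M). lra. }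
   destruct (cont_eps_inv _ _ CX eps Heps) as [d [Hd HX]].
   set (p := Rmin d (Rmin q (alpha0 om c)) / 2).
   assert (Hp0 : 0 < p). { unfold p. apply Rdiv_lt_0_compat; [|lra]. repeat apply Rmin_pos; lra. }
   assert (Hpd : p < d). { unfold p. pose proof (Rmin_l d (Rmin q (alpha0 om c))). lra. }
   assert (Hpq : p < q). { unfold p. pose proof (Rmin_r d (Rmin q (alpha0 om c))). pose proof (Rmin_l q (alpha0 om c)). lra. }
   assert (Hpa : p < alpha0 om c). { unfold p. pose proof (Rmin_r d (Rmin q (alpha0 om c))). pose proof (Rmin_r q (alpha0 om c)). lra. }
   exists p. split; [lra|]. split; [auto|].
   assert (HXp := HX p ltac:(rewrite Rminus_0_r, Rabs_right; lra)). cbv beta in HXp. rewrite HX0 in HXp.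
   rewrite Rminus_0_r in HXp.
   destruct (params om c p (or_intror (conj Hh1 Hh2)) ltac:(lra)) as [He3 [HKr [HB [HP [Hk [Hb [Hgg [Hgp0 [Hk1 _]]]]]]]]].
   rewrite Rabs_right in HXp by lra.
   assert (Hk2 : (kf om c p)^2 < 1) by lra.
   pose proof (Pk_lb _ Hk2).
   unfold Lf. apply Rlt_le_trans with (gf om c p * PI); [|apply Rmult_le_compat_l; lra].
   unfold gf. set (X := e3f om c p * (p - e1f om c p)) in *.
   assert (0 < sqrt X) by (apply sqrt_lt_R0; lra).
   assert (sqrt X < 2 * PI / (Rabs M + 1)).
   { apply Rsqr_incrst_0. unfold Rsqr. rewrite sqrt_sqrt by lra. unfold eps in HXp. simpl in HXp. lra.
     lra. apply Rlt_le, Rdiv_lt_0_compat. lra. pose proof (Rabs_pos M). lra. }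
   pose proof (Rle_abs M). pose proof (Rabs_pos M).
   apply Rlt_le_trans with (Rabs M + 1). lra.
   apply Rmult_le_reg_r with (sqrt X); auto.
   replace (2 / sqrt X * PI * sqrt X) with (2 * PI) by (field; lra).
   apply Rmult_le_reg_r with (/ (Rabs M + 1)). apply Rinv_0_lt_compat; lra.
   replace ((Rabs M + 1) * sqrt X * / (Rabs M + 1)) with (sqrt X) by (field; lra).
   unfold Rdiv in H4. lra. Qed.

Definition Uf om c p := 2 * PI / sqrt (p * sAf om c p).

Lemma clamp_cont a b x : continuous (fun p => Rmax a (Rmin p b)) x.
Proof. apply cont_eps. intros eps He. exists eps. split; auto. intros y Hy.
 apply Rabs_def2 in Hy. apply Rabs_def1;
 unfold Rmax, Rmin; destruct (Rle_dec y b); destruct (Rle_dec x b);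
 repeat match goal with |- context [Rle_dec ?u ?v] => destruct (Rle_dec u v) end; try reflexivity; lra. Qed.

Lemma exists_p om c L : Hyp om c -> L0 om c < L ->
  exists p, 0 < p < alpha0 om c /\ Lf om c p = L.
Proof. intros H HL. destruct (alpha0_facts om c H) as [Ha [HA _]].
 pose proof (sqrt_48 om c H).
 assert (HA0 : 0 < Afun om c (alpha0 om c)) by lra.
 assert (0 < sAf om c (alpha0 om c)) by (unfold sAf; apply sqrt_lt_R0; lra).
 assert (CU : continuous (Uf om c) (alpha0 om c)).
 { apply (ex_derive_continuous (K:=R_AbsRing) (V:=R_NormedModule)). unfold Uf.
   assert (Hd := exd_sAf om c _ HA0).
   auto_derive. repeat split; auto. nra. apply Rgt_not_eq, sqrt_lt_R0. nra. }
 assert (HU0 : Uf om c (alpha0 om c) = L0 om c) by reflexivity.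
 destruct (cont_eps_inv _ _ CU (L - L0 om c) ltac:(lra)) as [d [Hd HU]].
 set (p2 := Rmax (alpha0 om c / 2) (alpha0 om c - d / 2)).
 assert (Hp2 : 0 < p2 < alpha0 om c /\ Rabs (p2 - alpha0 om c) < d).
 { unfold p2, Rmax. destruct (Rle_dec _ _); split; try split; try lra;
   rewrite Rabs_left1 by lra; lra. }
 destruct Hp2 as [Hp2 Hp2d].
 assert (HL2 : Lf om c p2 < L).
 { pose proof (Lf_ub om c p2 H Hp2) as HLu. pose proof (HU p2 Hp2d) as HUp. rewrite HU0 in HUp.
   apply Rabs_def2 in HUp. unfold Uf in HUp, HLu. lra. }
 destruct (Lf_big om c H L p2 ltac:(lra)) as [p1 [Hp1 [Hp1a HL1]]].
 set (ft := fun p => Lf om c (Rmax p1 (Rmin p p2))).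
 assert (Cft : continuity ft).
 { intros x. apply continuity_pt_filterlim. unfold ft.
   apply (continuous_comp (fun p => Rmax p1 (Rmin p p2)) (Lf om c)).
   apply clamp_cont. apply Lf_cont; auto.
   unfold Rmax, Rmin; repeat match goal with |- context [Rle_dec ?u ?v] => destruct (Rle_dec u v) end; lra. }
 assert (E1 : ft p1 = Lf om c p1).
 { unfold ft. f_equal. rewrite Rmin_left by lra. rewrite Rmax_left by lra. reflexivity. }
 assert (E2 : ft p2 = Lf om c p2).
 { unfold ft. f_equal. rewrite Rmin_left by lra. rewrite Rmax_right by lra. reflexivity. }
 destruct (IVT_gen ft p1 p2 L Cft) as [p [Hp Hfp]].
 - rewrite E1, E2. unfold Rmin, Rmax. destruct (Rle_dec _ _); lra.
 - rewrite Rmin_left in Hp by lra. rewrite Rmax_right in Hp by lra.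
   exists p. split. lra. rewrite <- Hfp. unfold ft. f_equal.
   rewrite Rmin_left by lra. rewrite Rmax_right by lra. reflexivity. Qed.

Section Lims2.
Context {T : Type} {F : (T -> Prop) -> Prop} {FF : Filter F}.

Lemma lim_minus (f g : T -> R) a b : filterlim f F (locally a) -> filterlim g F (locally b) ->
  filterlim (fun x => f x - g x) F (locally (a - b)).
Proof. intros Hf Hg. assert (H := lim_plus f (fun x => -1 * g x) a (-1 * b) Hf (lim_mult _ _ _ _ (lim_const (-1)) Hg)).
 apply (lim_ext (fun x => f x + -1 * g x)). apply filter_forall; intros; ring.
 replace (a - b) with (a + -1 * b) by ring. exact H. Qed.

Lemma lim_div (f g : T -> R) a b : b <> 0 -> filterlim f F (locally a) -> filterlim g F (locally b) ->
  filterlim (fun x => f x / g x) F (locally (a / b)).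
Proof. intros Hb Hf Hg. apply lim_mult; auto. apply lim_inv; auto. Qed.

Lemma lim_pow2 (f : T -> R) a : filterlim f F (locally a) -> filterlim (fun x => (f x)^2) F (locally (a^2)).
Proof. intros Hf. assert (H := lim_mult f f a a Hf Hf).
 apply (lim_ext (fun x => f x * f x)). apply filter_forall; intros; ring.
 replace (a^2) with (a * a) by ring. exact H. Qed.

Lemma lim_squeeze (f g : T -> R) l : F (fun x => Rabs (f x - l) <= g x) -> filterlim g F (locally 0) ->
  filterlim f F (locally l).
Proof. intros H Hg. apply lim_eps. intros eps He.
 assert (H2 := lim_eps_inv g 0 Hg eps He).
 eapply filter_imp; [|apply filter_and; [exact H|exact H2]].
 intros x [A B]. rewrite Rminus_0_r in B. apply Rle_lt_trans with (g x); auto.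
 apply Rle_lt_trans with (Rabs (g x)); auto. apply Rle_abs. Qed.

End Lims2.

Lemma at_right_interval a : 0 < a -> at_right 0 (fun p => 0 < p < a).
Proof. intros Ha. exists (mkposreal a Ha). intros y Hy Hy0. split; auto.
 unfold ball in Hy. simpl in Hy. unfold AbsRing_ball, abs, minus, plus, opp in Hy. simpl in Hy.
 rewrite Ropp_0, Rplus_0_r in Hy. apply Rabs_def2 in Hy. lra. Qed.

Definition pL om c L := epsilon (inhabits 0) (fun p => 0 < p < alpha0 om c /\ Lf om c p = L).

Lemma pL_spec om c L : Hyp om c -> L0 om c < L -> 0 < pL om c L < alpha0 om c /\ Lf om c (pL om c L) = L.
Proof. intros H HL. unfold pL. apply epsilon_spec. apply exists_p; auto. Qed.

Lemma L0_pos om c : Hyp om c -> 0 < L0 om c.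
Proof. intros H. unfold L0. pose proof PI_RGT_0. apply Rdiv_lt_0_compat. lra.
 destruct (alpha0_facts om c H) as [Ha [HA _]]. pose proof (sqrt_48 om c H).
 apply sqrt_lt_R0. apply Rmult_lt_0_compat; auto. apply sqrt_lt_R0. lra. Qed.

Lemma pL_lim om c : Hyp om c -> filterlim (pL om c) (Rbar_locally p_infty) (at_right 0).
Proof. intros H P [eps HP].
 pose proof (Amin_pos om c H) as Hm. set (m := Rmin (64 * om) (48 * om + 4 * c^2)) in *.
 pose proof PI_RGT_0.
 assert (0 < sqrt m) by (apply sqrt_lt_R0; lra).
 pose proof (L0_pos om c H).
 exists (Rmax (L0 om c) (Rmax 1 (4 * PI^2 / (eps * sqrt m)))).
 intros L HL.
 assert (HL0 : L0 om c < L) by (eapply Rle_lt_trans; [apply Rmax_l | exact HL]).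
 assert (HL1 : 1 < L) by (eapply Rle_lt_trans; [eapply Rle_trans; [apply Rmax_l | apply Rmax_r] | exact HL]).
 assert (HL2 : 4 * PI^2 / (eps * sqrt m) < L) by (eapply Rle_lt_trans; [eapply Rle_trans; [apply Rmax_r | apply Rmax_r] | exact HL]).
 destruct (pL_spec om c L H HL0) as [Hp HLp].
 set (p := pL om c L) in *.
 apply HP; [|lra].
 unfold ball; simpl; unfold AbsRing_ball, abs, minus, plus, opp; simpl.
 rewrite Ropp_0, Rplus_0_r. rewrite Rabs_right by lra.
 pose proof (Lf_ub om c p H Hp) as Hub. rewrite HLp in Hub.
 assert (HsA : sqrt m <= sAf om c p).
 { unfold sAf. apply sqrt_le_1_alt. apply A_lb; auto. lra. }
 assert (0 < sqrt (p * sAf om c p)) by (apply sqrt_lt_R0; nra).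
 assert (Hs : sqrt (p * sAf om c p) <= 2 * PI / L).
 { apply Rmult_le_reg_r with L. lra. unfold Rdiv. rewrite Rmult_assoc, Rinv_l, Rmult_1_r by lra.
   apply Rmult_le_reg_l with (/ sqrt (p * sAf om c p)). apply Rinv_0_lt_compat; lra.
   rewrite <- Rmult_assoc, Rinv_l, Rmult_1_l by lra. unfold Rdiv in Hub. lra. }
 assert (Hs2 : p * sAf om c p <= (2 * PI / L)^2).
 { rewrite <- (sqrt_sqrt (p * sAf om c p)) by nra. replace ((2 * PI / L)^2) with ((2*PI/L)*(2*PI/L)) by ring.
   apply Rmult_le_compat; lra. }
 assert (Hpm : p * sqrt m <= 4 * PI^2 / L^2).
 { replace (4 * PI^2 / L^2) with ((2 * PI / L)^2) by (field; lra). nra. }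
 assert (Hpb : p <= 4 * PI^2 / (L * sqrt m)).
 { apply Rmult_le_reg_r with (L * sqrt m). nra.
   replace (4 * PI ^ 2 / (L * sqrt m) * (L * sqrt m)) with (4 * PI^2 / L^2 * L^2) by (field; split; lra).
   apply Rle_trans with (4 * PI^2 / L^2 * L). nra.
   apply Rmult_le_compat_l. apply Rlt_le, Rdiv_lt_0_compat; nra. nra. }
 eapply Rle_lt_trans; [exact Hpb|].
 assert (E : 4 * PI^2 = 4 * PI ^ 2 / (eps * sqrt m) * (eps * sqrt m)).
 { field. split. lra. destruct eps; simpl; lra. }
 pose proof (cond_pos eps).
 assert (4 * PI^2 < L * (eps * sqrt m)).
 { rewrite E. apply Rmult_lt_compat_r. nra. auto. }
 apply Rmult_lt_reg_r with (L * sqrt m). nra.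
 unfold Rdiv. rewrite Rmult_assoc, Rinv_l, Rmult_1_r by nra. nra. Qed.

Lemma exd_B2f om c p : 0 < Afun om c p -> p - e1f om c p <> 0 -> ex_derive (B2f om c) p.
Proof. intros H H2. unfold B2f.
 assert (Hd1 := exd_e1f om c p H). assert (Hd3 := exd_e3f om c p H).
 auto_derive. repeat split; auto. Qed.

Lemma sol_identity om c x : c^2/4 < om ->
  e3f om c 0 * ((1 - 1 * (sin (gd (x / (2 * gf om c 0))))^2) /
                (1 + B2f om c 0 * (sin (gd (x / (2 * gf om c 0))))^2))
  = (4 * om - c ^ 2) / (sqrt om * (cosh (sqrt (4 * om - c ^ 2) * x) - c / (2 * sqrt om))).
Proof. intros H1. assert (H : Hyp om c) by (left; auto).
 destruct (hyp_facts om c H) as [Hom [Hc1 Hc2]].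
 destruct (vals0 om c H) as [Es [E3 [E1 HA0]]].
 assert (Hw := sqrt_sqrt om ltac:(lra)). assert (0 < sqrt om) by (apply sqrt_lt_R0; lra).
 set (w := sqrt om) in *.
 assert (Hc3 : c < 2 * w) by nra.
 assert (HR0 : 0 < 4 * om - c^2) by nra.
 assert (HR := sqrt_sqrt (4 * om - c^2) ltac:(lra)).
 assert (0 < sqrt (4 * om - c^2)) by (apply sqrt_lt_R0; lra).
 set (R := sqrt (4 * om - c^2)) in *.
 assert (Hg : gf om c 0 = 1 / R).
 { unfold gf. rewrite E3, E1.
   replace ((2 * c + 4 * w) * (0 - (2 * c - 4 * w))) with (2^2 * (4 * om - c^2)) by (rewrite <- Hw; ring).
   rewrite sqrt_mult_alt by nra. rewrite sqrt_pow2 by lra. fold R. field. lra. }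
 rewrite Hg. set (v := x / (2 * (1 / R))).
 assert (Hv : R * x = 2 * v) by (unfold v; field; lra).
 rewrite Hv. rewrite sin_gd.
 assert (HB : B2f om c 0 = (2 * c + 4 * w) / (4 * w - 2 * c)).
 { unfold B2f. rewrite E3, E1. field. lra. }
 rewrite HB, E3.
 unfold cosh, sinh.
 replace (2 * v) with (v + v) by ring. rewrite exp_plus. rewrite !exp_Ropp.
 rewrite exp_plus.
 pose proof (exp_pos v). set (E := exp v) in *.
 replace om with (w * w) by auto.
 assert (0 < E * E) by nra.
 assert (1 <= (E * E + / (E * E)) / 2).
 { assert (0 < / (E * E)) by (apply Rinv_0_lt_compat; lra).
   assert (Eq : E * E + / (E * E) - 2 = (E * E - 1)^2 * / (E * E)) by (field; lra).
   assert (0 <= (E * E - 1)^2 * / (E * E)) by (apply Rmult_le_pos; [apply pow2_ge_0 | lra]).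
   lra. }
 assert (E4 : 2 * (E * E) <= E * E * (E * E) + 1) by (pose proof (pow2_ge_0 (E*E - 1)); nra).
 field. repeat split; try lra.
 - apply Rgt_not_eq. assert (0 < E * E * (2 * w - c)) by (apply Rmult_lt_0_compat; lra). nra.
 - apply Rgt_not_eq. assert (0 < (4 * w - 2 * c) * (E * E + 1) ^ 2) by (apply Rmult_lt_0_compat; [lra|]; apply pow_lt; lra).
   assert (0 <= (2 * c + 4 * w) * (E * E - 1) ^ 2) by (apply Rmult_le_pos; [lra|apply pow2_ge_0]). lra.
Qed.

Lemma PhiP_sq_eq om c p x : Hyp om c -> 0 < p < alpha0 om c ->
  PhiP om c p x = sqrt (e3f om c p * ((1 - K2f om c p * (sin (jam (x / (2 * gf om c p)) (kf om c p)))^2) /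
                                      (1 + B2f om c p * (sin (jam (x / (2 * gf om c p)) (kf om c p)))^2))).
Proof. intros H Hp.
 destruct (params om c p H Hp) as [He3 [HK [HB [HP [Hk [Hb [Hgg [Hgp0 [Hk1 _]]]]]]]]].
 unfold PhiP. rewrite PhiF_sq by (try rewrite Hk; lra). unfold qf, thf. rewrite Hk, Hb. reflexivity. Qed.

Lemma case1_lim om c x : c^2/4 < om -> 0 <= x ->
  filterlim (fun p => PhiP om c p x) (at_right 0) (locally (soliton om c x)).
Proof. intros H1 Hx. assert (H : Hyp om c) by (left; auto).
 destruct (hyp_facts om c H) as [Hom [Hc1 Hc2]].
 destruct (vals0 om c H) as [Es [E3 [E1 HA0]]].
 destruct (alpha0_facts om c H) as [Ha _].
 assert (Hw := sqrt_sqrt om ltac:(lra)). assert (0 < sqrt om) by (apply sqrt_lt_R0; lra).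
 assert (Hc3 : c < 2 * sqrt om) by nra.
 pose proof PI_RGT_0.
 assert (HX0 : 0 < e3f om c 0 * (0 - e1f om c 0)) by (rewrite E3, E1; nra).
 assert (Lg := lim_right _ (ex_derive_continuous (K:=R_AbsRing) (V:=R_NormedModule) _ _ (exd_gf om c 0 HA0 HX0))).
 assert (LK := lim_right _ (ex_derive_continuous (K:=R_AbsRing) (V:=R_NormedModule) _ _
                  (exd_K2f om c 0 HA0 ltac:(rewrite E3; lra) ltac:(rewrite E1; lra)))).
 assert (LB := lim_right _ (ex_derive_continuous (K:=R_AbsRing) (V:=R_NormedModule) _ _
                  (exd_B2f om c 0 HA0 ltac:(rewrite E1; lra)))).
 assert (L3 := lim_right _ (ex_derive_continuous (K:=R_AbsRing) (V:=R_NormedModule) _ _ (exd_e3f om c 0 HA0))).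
 assert (HK0 : K2f om c 0 = 1) by (unfold K2f; field; rewrite E3, E1; split; lra).
 rewrite HK0 in LK.
 set (g0 := gf om c 0) in *.
 assert (Hg0 : 0 < g0). { unfold g0, gf. apply Rdiv_lt_0_compat. lra. apply sqrt_lt_R0. lra. }
 set (v0 := x / (2 * g0)).
 assert (Hv0 : 0 <= v0) by (unfold v0; apply Rmult_le_pos; [lra|]; apply Rlt_le, Rinv_0_lt_compat; lra).
 assert (Lv : filterlim (fun p => x / (2 * gf om c p)) (at_right 0) (locally v0)).
 { apply lim_div. lra. apply lim_const. apply lim_mult. apply lim_const. exact Lg. }
 set (th0 := gd v0). destruct (gd_range v0 Hv0) as [Ht1 Ht2]. fold th0 in Ht1, Ht2.
 assert (HF1 : ellF 1 th0 = v0) by (apply ellF1_gd; auto).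
 assert (Hct : 0 < cos th0) by (apply cos_gt_0; lra).
 assert (Lth : filterlim (fun p => jam (x / (2 * gf om c p)) (kf om c p)) (at_right 0) (locally th0)).
 { apply lim_eps. intros eps Heps.
   set (eta := Rmin eps ((PI/2 - th0)/2) / 2).
   assert (Heta : 0 < eta /\ eta < eps /\ th0 + eta < PI/2).
   { unfold eta. pose proof (Rmin_l eps ((PI/2 - th0)/2)). pose proof (Rmin_r eps ((PI/2 - th0)/2)).
     assert (0 < Rmin eps ((PI/2 - th0)/2)) by (apply Rmin_pos; lra). lra. }
   destruct Heta as [Heta1 [Heta2 Heta3]].
   set (C := th0 / (cos th0)^4 + 1).
   assert (HC1 : th0 / (cos th0)^4 <= C - 1) by (unfold C; lra).
   assert (HC0 : 0 <= th0 / (cos th0)^4) by (apply Rmult_le_pos; [lra|]; apply Rlt_le, Rinv_0_lt_compat; apply pow_lt; lra).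
   assert (Ev1 := at_right_interval (alpha0 om c) Ha).
   assert (Ev2 := lim_eps_inv _ _ Lv (eta/2) ltac:(lra)).
   assert (Ev3 := lim_eps_inv _ _ LK (eta/2/C) ltac:(apply Rdiv_lt_0_compat; lra)).
   eapply filter_imp; [|apply filter_and; [exact Ev1 | apply filter_and; [exact Ev2 | exact Ev3]]].
   intros p [Hp [Hvp HKp]].
   destruct (params om c p H Hp) as [He3 [HKr [HB [HP [Hk [Hb [Hgg [Hgp0 [Hk1 _]]]]]]]]].
   set (k := kf om c p) in *. set (v := x / (2 * gf om c p)) in *.
   assert (Hk2 : k^2 < 1) by lra.
   assert (Hv : 0 <= v) by (unfold v; apply Rmult_le_pos; [lra|]; apply Rlt_le, Rinv_0_lt_compat; lra).
   set (th := jam v k).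
   assert (Hsp : ellF k th = v) by (apply jam_spec; auto).
   destruct (ellF_k_le_1 k th0 Hk2 ltac:(lra)) as [Hle1 Hle2]. rewrite HF1 in Hle1, Hle2. rewrite Hk in Hle2.
   apply Rabs_def2 in Hvp. apply Rabs_def2 in HKp.
   assert (Hsm : th0 * ((1 - K2f om c p) / cos th0 ^ 4) < eta / 2).
   { assert (0 <= 1 - K2f om c p) by lra.
     assert ((1 - K2f om c p) * C < eta / 2).
     { apply Rmult_lt_reg_r with (/ C). apply Rinv_0_lt_compat; lra.
       rewrite Rmult_assoc, Rinv_r, Rmult_1_r by lra. unfold Rdiv in HKp. lra. }
     replace (th0 * ((1 - K2f om c p) / cos th0 ^ 4)) with ((1 - K2f om c p) * (th0 / cos th0 ^ 4)) by (unfold Rdiv; ring).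
     apply Rle_lt_trans with ((1 - K2f om c p) * C); auto. apply Rmult_le_compat_l; lra. }
   apply Rabs_def1.
   -
     assert (U1 := ellF_lb k th0 (th0 + eta) Hk2 ltac:(lra)).
     destruct (Rlt_le_dec th (th0 + eta)) as [Hlt|Hge]. lra.
     assert (U2 := ellF_mono k (th0 + eta) th Hk2 Hge). lra.
   -
     assert (U1 := ellF_lb k (th0 - eta) th0 Hk2 ltac:(lra)).
     destruct (Rlt_le_dec (th0 - eta) th) as [Hlt|Hge]. lra.
     assert (U2 := ellF_mono k th (th0 - eta) Hk2 Hge). lra. }
 set (s0 := sin th0).
 assert (Ls := lim_sin _ _ Lth). fold s0 in Ls.
 assert (Ls2 := lim_pow2 _ _ Ls).
 assert (HB0 : 0 <= B2f om c 0).
 { unfold B2f. rewrite E3, E1. apply Rmult_le_pos. lra. apply Rlt_le, Rinv_0_lt_compat. lra. }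
 assert (Hden : 0 < 1 + B2f om c 0 * s0^2) by (pose proof (pow2_ge_0 s0); nra).
 assert (Lnum := lim_minus _ _ _ _ (lim_const 1) (lim_mult _ _ _ _ LK Ls2)).
 assert (Lden := lim_plus _ _ _ _ (lim_const 1) (lim_mult _ _ _ _ LB Ls2)).
 assert (Lf2 := lim_mult _ _ _ _ L3 (lim_div _ _ _ _ (Rgt_not_eq _ _ Hden) Lnum Lden)).
 assert (Lfin := lim_sqrt _ _ Lf2).
 unfold soliton. destruct (Rlt_dec (c ^ 2 / 4) om); [|lra].
 rewrite <- (sol_identity om c x H1). fold g0. fold v0. fold th0. fold s0.
 eapply lim_ext; [|exact Lfin].
 eapply filter_imp; [|exact (at_right_interval (alpha0 om c) Ha)].
 intros p Hp. cbv beta. rewrite PhiP_sq_eq by auto. reflexivity. Qed.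


Lemma exp_le_of x y : x <= y -> exp x <= exp y.
Proof. intros [H|H]. left; apply exp_increasing; auto. subst; lra. Qed.

Lemma sin_jam_bounds k v : k^2 < 1 -> 0 <= v < 1 ->
  v / (1 + v) <= sin (jam v k) <= v.
Proof. intros Hk Hv. pose proof PI_RGT_0. pose proof PI2_1.
 set (th := jam v k).
 assert (Ht0 : 0 <= th) by (apply jam_nonneg; lra).
 assert (Htv : th <= v) by (apply jam_le; lra).
 assert (Hsp : ellF k th = v) by (apply jam_spec; auto).
 assert (Hth : th < PI/2) by lra.
 assert (Hc : 0 < cos th) by (apply cos_gt_0; lra).
 assert (Hs0 : 0 <= sin th) by (apply sin_ge_0; lra).
 assert (Hst : sin th <= th).
 { destruct (Req_dec th 0) as [E|E]. rewrite E, sin_0. lra. left. apply sin_lt_x. lra. }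
 split; [|lra].
 destruct (ellF_k_le_1 k th Hk ltac:(lra)) as [Hle _].
 rewrite ellF1_G1 in Hle by lra. unfold G1 in Hle. rewrite Hsp in Hle.
 assert (HY : 0 < (1 + sin th) / cos th) by (apply Rdiv_lt_0_compat; lra).
 apply exp_le_of in Hle. rewrite exp_ln in Hle by auto.
 pose proof (exp_ineq1_le v) as He.
 set (E := exp v) in *. set (s := sin th) in *.
 assert (HC := sin2cos2 th). fold s in HC.
 assert (H1 : E * cos th <= 1 + s).
 { apply Rmult_le_reg_r with (/ cos th). apply Rinv_0_lt_compat; lra.
   rewrite Rmult_assoc, Rinv_r, Rmult_1_r by lra. unfold Rdiv in Hle. lra. }
 assert (H2 : E^2 * (1 - s^2) <= (1 + s)^2).
 { replace (E^2 * (1 - s^2)) with ((E * cos th)^2) by (rewrite <- HC; ring).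
   apply pow_incr. split; [|auto]. apply Rmult_le_pos; lra. }
 assert (Hs1 : s < 1).
 { assert (0 < cos th ^ 2) by (apply pow_lt; lra). assert (s^2 < 1) by lra. nra. }
 assert (H3 : E^2 * (1 - s) <= 1 + s).
 { apply Rmult_le_reg_r with (1 + s). lra.
   replace (E ^ 2 * (1 - s) * (1 + s)) with (E^2 * (1 - s^2)) by ring. nra. }
 assert (H4 : (1 + v)^2 <= E^2) by (apply pow_incr; lra).
 apply Rmult_le_reg_r with (1 + v). lra.
 replace (v / (1 + v) * (1 + v)) with v by (field; lra). nra. Qed.

Lemma case2_lim om c x : om = c^2/4 -> 0 < c -> 0 <= x ->
  filterlim (fun p => PhiP om c p x) (at_right 0) (locally (soliton om c x)).
Proof. intros Hom Hc Hx. assert (H : Hyp om c) by (right; auto).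
 destruct (vals0 om c H) as [Es [E3 [E1 HA0]]].
 destruct (alpha0_facts om c H) as [Ha _].
 assert (Hw : sqrt om = c / 2).
 { rewrite Hom. replace (c^2/4) with ((c/2)^2) by field. apply sqrt_pow2. lra. }
 rewrite Hw in E3, E1. replace (2 * c + 4 * (c / 2)) with (4 * c) in E3 by field.
 replace (2 * c - 4 * (c / 2)) with 0 in E1 by field.
 pose proof PI_RGT_0. pose proof PI2_1.
 assert (L3 := lim_right _ (ex_derive_continuous (K:=R_AbsRing) (V:=R_NormedModule) _ _ (exd_e3f om c 0 HA0))).
 rewrite E3 in L3.
 assert (CX : continuous (fun p => e3f om c p * (p - e1f om c p)) 0).
 { apply (ex_derive_continuous (K:=R_AbsRing) (V:=R_NormedModule)).
   assert (Hd1 := exd_e1f om c 0 HA0). assert (Hd3 := exd_e3f om c 0 HA0).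
   auto_derive. repeat split; auto. }
 assert (LX := lim_right _ CX). cbv beta in LX. rewrite E3, E1 in LX. replace (4 * c * (0 - 0)) with 0 in LX by ring.
 unfold soliton. destruct (Rlt_dec (c ^ 2 / 4) om) as [Hlt|_]; [lra|].
 assert (Ev1 := at_right_interval (alpha0 om c) Ha).
 destruct (Req_dec x 0) as [Hx0|Hx0].
 - subst x. replace (4 * c / ((c * 0) ^ 2 + 1)) with (4 * c) by field.
   apply lim_sqrt in L3.
   eapply lim_ext; [|exact L3].
   eapply filter_imp; [|exact Ev1]. intros p Hp. cbv beta.
   destruct (params om c p H Hp) as [He3 [HKr [HB [HP [Hk [Hb [Hgg [Hgp0 [Hk1 _]]]]]]]]].
   rewrite PhiP_sq_eq by auto. replace (0 / (2 * gf om c p)) with 0 by (field; lra).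
   rewrite jam_0 by lra. rewrite sin_0. f_equal. field.
 - assert (Hxp : 0 < x) by lra.
   assert (Lv : filterlim (fun p => x * sqrt (e3f om c p * (p - e1f om c p)) / 4) (at_right 0) (locally 0)).
   { assert (Lv0 : filterlim (fun p => x * sqrt (e3f om c p * (p - e1f om c p)) / 4) (at_right 0) (locally (x * sqrt 0 / 4))).
     { apply lim_div. lra. apply lim_mult. apply lim_const. apply lim_sqrt. exact LX. apply lim_const. }
     rewrite sqrt_0 in Lv0. replace (x * 0 / 4) with 0 in Lv0 by field. exact Lv0. }
   assert (Ev2 := lim_eps_inv _ _ Lv (1/2) ltac:(lra)).
   set (Q := fun p => x^2 * e3f om c p * (e3f om c p - p) / 16).
   assert (LQ : filterlim Q (at_right 0) (locally (c^2 * x^2))).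
   { replace (c^2 * x^2) with (x^2 * (4 * c) * (4 * c - 0) / 16) by field.
     unfold Q. apply lim_div. lra. apply lim_mult. apply lim_mult. apply lim_const. exact L3.
     apply lim_minus. exact L3. apply (lim_right (fun p => p)).
     apply (ex_derive_continuous (K:=R_AbsRing) (V:=R_NormedModule)). auto_derive. auto.
     apply lim_const. }
   set (v := fun p => x * sqrt (e3f om c p * (p - e1f om c p)) / 4) in *.
   set (s := fun p => sin (jam (x / (2 * gf om c p)) (kf om c p))).
   assert (Ev : at_right 0 (fun p => 0 < p < alpha0 om c /\ 0 < v p < 1 /\ x / (2 * gf om c p) = v p /\
              v p / (1 + v p) <= s p <= v p /\ 0 < K2f om c p < 1 /\
              B2f om c p * (s p)^2 = Q p * (s p / v p)^2)).
   { eapply filter_imp; [|apply filter_and; [exact Ev1 | exact Ev2]].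
     intros p [Hp Hvp]. rewrite Rminus_0_r in Hvp.
     destruct (params om c p H Hp) as [He3 [HKr [HB [HP [Hk [Hb [Hgg [Hgp0 [Hk1 _]]]]]]]]].
     destruct (roots om c p H Hp) as [Hr1 Hr3].
     assert (0 < sqrt (e3f om c p * (p - e1f om c p))) by (apply sqrt_lt_R0; lra).
     assert (HXs := sqrt_sqrt (e3f om c p * (p - e1f om c p)) ltac:(lra)).
     assert (Hvpos : 0 < v p) by (unfold v; apply Rdiv_lt_0_compat; [apply Rmult_lt_0_compat|]; lra).
     rewrite Rabs_right in Hvp by lra.
     assert (Hveq : x / (2 * gf om c p) = v p) by (unfold v, gf; field; lra).
     split; auto. split; [lra|]. split; auto.
     split. { unfold s. rewrite Hveq. apply sin_jam_bounds. rewrite Hk; lra. lra. }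
     split; auto.
     assert (Hv2 : v p ^ 2 = x^2 * (e3f om c p * (p - e1f om c p)) / 16).
     { unfold v. replace ((x * sqrt (e3f om c p * (p - e1f om c p)) / 4) ^ 2) with
         (x^2 * (sqrt (e3f om c p * (p - e1f om c p)) * sqrt (e3f om c p * (p - e1f om c p))) / 16) by field.
       rewrite HXs. reflexivity. }
     replace ((s p / v p)^2) with (s p^2 / v p^2) by (field; lra). rewrite Hv2.
     unfold Q, B2f. field. repeat split; lra. }
   assert (Lr : filterlim (fun p => s p / v p) (at_right 0) (locally 1)).
   { apply (lim_squeeze _ v). 
     - eapply filter_imp; [|exact Ev]. intros p [Hp [Hvp [Hveq [Hsb _]]]].
       assert (s p / v p <= 1).
       { apply Rmult_le_reg_r with (v p); [lra|]. replace (s p / v p * v p) with (s p) by (field; lra). lra. }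
       assert (1 / (1 + v p) <= s p / v p).
       { apply Rmult_le_reg_r with (v p); [lra|]. replace (s p / v p * v p) with (s p) by (field; lra).
         replace (1 / (1 + v p) * v p) with (v p / (1 + v p)) by (field; lra). lra. }
       assert (1 - 1 / (1 + v p) <= v p).
       { replace (1 - 1 / (1 + v p)) with (v p / (1 + v p)) by (field; lra).
         apply Rmult_le_reg_r with (1 + v p); [lra|]. replace (v p / (1 + v p) * (1 + v p)) with (v p) by (field; lra). nra. }
       rewrite Rabs_left1 by lra. lra.
     - exact Lv. }
   assert (LKs : filterlim (fun p => K2f om c p * (s p)^2) (at_right 0) (locally 0)).
   { apply (lim_squeeze _ (fun p => (v p)^2)).
     - eapply filter_imp; [|exact Ev]. intros p [Hp [Hvp [Hveq [Hsb [HK _]]]]].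
       rewrite Rminus_0_r. assert (0 <= s p) by (assert (0 <= v p / (1 + v p)) by (apply Rdiv_le_0_compat; lra); lra).
       rewrite Rabs_right by nra. assert (s p ^2 <= v p ^2) by (apply pow_incr; lra). nra.
     - assert (L2 := lim_pow2 _ _ Lv). replace (0^2) with 0 in L2 by ring. exact L2. }
   assert (LBs : filterlim (fun p => Q p * (s p / v p)^2) (at_right 0) (locally (c^2 * x^2 * 1^2)))
     by (apply lim_mult; [exact LQ | apply lim_pow2; exact Lr]).
   assert (Hden : 0 < 1 + c^2 * x^2 * 1^2) by nra.
   assert (Lnum := lim_minus _ _ _ _ (lim_const 1) LKs).
   assert (Lden := lim_plus _ _ _ _ (lim_const 1) LBs).
   assert (Lf2 := lim_mult _ _ _ _ L3 (lim_div _ _ _ _ (Rgt_not_eq _ _ Hden) Lnum Lden)).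
   assert (Lfin := lim_sqrt _ _ Lf2).
   replace (4 * c / ((c * x) ^ 2 + 1)) with (4 * c * ((1 - 0) / (1 + c ^ 2 * x ^ 2 * 1 ^ 2))) by (field; nra).
   eapply lim_ext; [|exact Lfin].
   eapply filter_imp; [|exact Ev]. intros p [Hp [_ [_ [_ [_ HBs]]]]]. cbv beta.
   rewrite PhiP_sq_eq by auto. fold (s p). rewrite HBs. reflexivity. Qed.

Lemma soliton_even om c x : soliton om c (- x) = soliton om c x.
Proof. assert (Hc : forall y, cosh (- y) = cosh y) by (intros; unfold cosh; rewrite Ropp_involutive; field).
 unfold soliton. destruct (Rlt_dec _ _).
 - replace (sqrt (4 * om - c ^ 2) * - x) with (- (sqrt (4 * om - c ^ 2) * x)) by ring. rewrite Hc. reflexivity.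
 - replace ((c * - x) ^ 2) with ((c * x) ^ 2) by ring. reflexivity. Qed.

Lemma lim_pos om c x : Hyp om c -> 0 <= x ->
  filterlim (fun p => PhiP om c p x) (at_right 0) (locally (soliton om c x)).
Proof. intros H Hx. destruct H as [H|[H1 H2]].
 - apply case1_lim; auto.
 - apply case2_lim; auto. Qed.

Lemma lim_all om c x : Hyp om c ->
  filterlim (fun p => PhiP om c p x) (at_right 0) (locally (soliton om c x)).
Proof. intros H. destruct (Rle_dec 0 x). apply lim_pos; auto.
 assert (L := lim_pos om c (- x) H ltac:(lra)). rewrite soliton_even in L.
 destruct (alpha0_facts om c H) as [Ha _].
 eapply lim_ext; [|exact L].
 eapply filter_imp; [|exact (at_right_interval (alpha0 om c) Ha)].
 intros p Hp. destruct (PhiP_bump om c p H Hp) as [_ [_ [_ [Hev _]]]]. apply Hev. Qed.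

Theorem theorem1p1 (om c : R) :
  (c ^ 2 / 4 < om \/ (om = c ^ 2 / 4 /\ 0 < c)) ->
  exists PhiL : R -> R -> R,
    (forall L, L0 om c < L ->
       pos_single_bump_solution om c L (PhiL L) /\
       exists eta3 g k beta : R,
         0 < eta3 /\ 0 < g /\ 0 < k < 1 /\
         forall x, - L <= x <= L ->
           (PhiL L x) ^ 2 =
             eta3 * (jdn (x / (2 * g)) k) ^ 2 /
               (1 + beta ^ 2 * (jsn (x / (2 * g)) k) ^ 2)) /\
    (forall x, is_lim (fun L => PhiL L x) p_infty (soliton om c x)).
Proof. intros H. change (Hyp om c) in H.
 exists (fun L => PhiP om c (pL om c L)). split.
 - intros L HL. destruct (pL_spec om c L H HL) as [Hp HLp].
   set (p := pL om c L) in *.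
   split. { rewrite <- HLp. apply PhiP_bump; auto. }
   destruct (params om c p H Hp) as [He3 [HKr [HB [HP [Hk [Hb [Hgg [Hgp0 [Hk1 _]]]]]]]]].
   exists (e3f om c p), (gf om c p), (kf om c p), (bf om c p).
   split; auto. split; auto. split; auto.
   intros x _. unfold PhiP. apply PhiF_sq2; lra.
 - intros x. unfold is_lim.
   exact (filterlim_comp _ _ _ (pL om c) (fun p => PhiP om c p x) _ (at_right 0) _ (pL_lim om c H) (lim_all om c x H)). Qed.
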